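(* Let $\mathfrak{g}$ be a four-dimensional real Lie algebra, oriented by a volume form $\mu\in\Lambda^4(\mathfrak{g}^* )$, and assume $\mathfrak{g}$ admits a positively oriented symplectic form, i.e. a closed 2-form $\omega$ with $\omega\wedge\omega=c\,\mu$ for some $c>0$. Then $\mathfrak{g}$ satisfies the tame-compatible property if and only if the space $B_2$ of boundary 2-vectors is negative semi-definite for the bilinear form $\Phi_\mu(u,v)=\mu(u\wedge v)$ on $\Lambda^2(\mathfrak{g})$, that is, if and only if $\mu(u\wedge u)\le 0$ for all $u\in B_2$.
   Context: The Chevalley–Eilenberg differential $d$ on forms on a Lie algebra $\mathfrak{g}$ is defined on 1-forms by $d\alpha(u,v)=-\alpha([u,v])$ and extended to all forms by the Leibniz rule. $\mathcal{Z}^2$ denotes the space of closed 2-forms ($d\alpha=0$). The space of boundary 2-vectors $B_2\subset\Lambda^2(\mathfrak{g})$ is the annihilator of $\mathcal{Z}^2$: $B_2=\{u\in\Lambda^2(\mathfrak{g}) : \alpha(u)=0 \text{ for all } \alpha\in\mathcal{Z}^2\}$. A symplectic form on $\mathfrak{g}$ is a closed non-degenerate 2-form. An almost complex structure on $\mathfrak{g}$ is a linear map $J:\mathfrak{g}\to\mathfrak{g}$ with $J^2=-1$; it induces the given orientation if for some (equivalently any) basis of the form $(v_1,Jv_1,v_2,Jv_2)$ one has $\mu(v_1,Jv_1,v_2,Jv_2)>0$. $J$ is tamed by a symplectic form $\omega$ if $\omega(u,Ju)>0$ for all $u\neq0$; $J$ is compatible with $\omega$ if it is tamed by $\omega$ and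 $\omega(Jv,Jw)=\omega(v,w)$ for all $v,w$. An oriented Lie algebra $\mathfrak{g}$ satisfies the tame-compatible property if every almost complex structure $J$ on $\mathfrak{g}$ inducing the given orientation which is tamed by some symplectic form is also compatible with some symplectic form. *)

(* Defs.v *)
(* A 4-dimensional real Lie algebra is modelled as R^4 (row
   vectors 'rV[R]_4) with bracket given by structure constants c, over an
   arbitrary real closed field R. *)
From HB Require Import structures.
From mathcomp Require Import all_boot all_order all_algebra all_fingroup.
Set Implicit Arguments. Unset Strict Implicit. Unset Printing Implicit Defensive.
Import Order.TTheory GRing.Theory Num.Theory.
Local Open Scope ring_scope.

Section Defs.
Variable R : rcfType.
Notation vec := 'rV[R]_4.

Definition lie_br (c : 'I_4 -> 'I_4 -> 'I_4 -> R) (x y : vec) : vec :=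
  \row_k \sum_i \sum_j x 0 i * y 0 j * c i j k.

Definition is_lie (c : 'I_4 -> 'I_4 -> 'I_4 -> R) : Prop :=
  (forall x y, lie_br c x y = - lie_br c y x) /\
  (forall x y z, lie_br c x (lie_br c y z) + lie_br c y (lie_br c z x)
                 + lie_br c z (lie_br c x y) = 0).

Definition is_2form (A : 'M[R]_4) : Prop := A^T = - A.
Definition form2 (A : 'M[R]_4) (x y : vec) : R :=
  \sum_i \sum_j x 0 i * y 0 j * A i j.

Definition d2 c (A : 'M[R]_4) (x y z : vec) : R :=
  - form2 A (lie_br c x y) z + form2 A (lie_br c x z) y
  - form2 A (lie_br c y z) x.

Definition closed2 c (A : 'M[R]_4) : Prop :=
  is_2form A /\ forall x y z, d2 c A x y z = 0.

Definition nondeg (A : 'M[R]_4) : Prop :=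
  forall x, (forall y, form2 A x y = 0) -> x = 0.

Definition symplectic c (A : 'M[R]_4) : Prop := closed2 c A /\ nondeg A.

(* 4-forms evaluated on a 4-tuple of vectors; volume form mu = m e^1234 *)
Definition vol (m : R) (v : 'I_4 -> vec) : R :=
  m * \det (\matrix_(i, j) v i 0 j).

Definition wedge22 (A B : 'M[R]_4) (v : 'I_4 -> vec) : R :=
  4%:R^-1 * \sum_(s : 'S_4) (-1) ^+ (odd_perm s)
     * form2 A (v (s (inord 0))) (v (s (inord 1)))
     * form2 B (v (s (inord 2))) (v (s (inord 3))).

Definition quad (T : Type) (a b c d : T) (t : 'I_4) : T := nth a [:: a; b; c; d] t.

Definition ebasis (i : 'I_4) : vec := delta_mx 0 i.

(* 2-vectors: skew matrices U, u = sum_{i<j} U_ij e_i /\ e_j *)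
Definition pair2 (A U : 'M[R]_4) : R :=
  \sum_(i : 'I_4) \sum_(j : 'I_4 | (i < j)%N) U i j * A i j.

Definition Phi (m : R) (U V : 'M[R]_4) : R :=
  \sum_(i : 'I_4) \sum_(j : 'I_4 | (i < j)%N) \sum_(k : 'I_4) \sum_(l : 'I_4 | (k < l)%N)
    U i j * V k l * vol m (quad (ebasis i) (ebasis j) (ebasis k) (ebasis l)).

(* boundary 2-vectors: annihilator of closed 2-forms *)
Definition B2 c (U : 'M[R]_4) : Prop :=
  is_2form U /\ forall A, closed2 c A -> pair2 A U = 0.

Definition acs (J : 'M[R]_4) : Prop := J *m J = - 1%:M.

Definition induces_orient (m : R) (J : 'M[R]_4) : Prop :=
  exists v1 v2 : vec,
    let v := quad v1 (v1 *m J) v2 (v2 *m J) in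
    \det (\matrix_(i, j) v i 0 j) != 0 /\ 0 < vol m v.

Definition tamed (W J : 'M[R]_4) : Prop :=
  forall u : vec, u != 0 -> 0 < form2 W u (u *m J).

Definition compatible (W J : 'M[R]_4) : Prop :=
  tamed W J /\ forall v w : vec, form2 W (v *m J) (w *m J) = form2 W v w.

Definition tame_compatible c (m : R) : Prop :=
  forall J, acs J -> induces_orient m J ->
    (exists W, symplectic c W /\ tamed W J) ->
    exists W, symplectic c W /\ compatible W J.

End Defs.

(* Main.v *)
Set Warnings "-notation-overridden,-ambiguous-paths,-notation-incompatible-prefix".
Require Import Defs.
From HB Require Import structures.
From mathcomp Require Import all_boot all_order all_algebra all_fingroup.
From mathcomp Require Import ring lra zify.
From Stdlib Require Import Classical.
Set Implicit Arguments. Unset Strict Implicit. Unset Printing Implicit Defensive.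
Import Order.TTheory GRing.Theory Num.Theory.
Local Open Scope ring_scope.

Section L1.
Variable R : rcfType.

Lemma ord4_0 : (ord0 : 'I_4) = inord 0. Proof. by apply/val_inj; rewrite /= inordK. Qed.
Lemma ord4_1 : (lift ord0 ord0 : 'I_4) = inord 1. Proof. by apply/val_inj; rewrite /= inordK. Qed.
Lemma ord4_2 : (lift ord0 (lift ord0 ord0) : 'I_4) = inord 2. Proof. by apply/val_inj; rewrite /= inordK. Qed.
Lemma ord4_3 : (lift ord0 (lift ord0 (lift ord0 ord0)) : 'I_4) = inord 3.
Proof. by apply/val_inj; rewrite /= inordK. Qed.

Lemma sum4 (F : 'I_4 -> R) :
  \sum_(i < 4) F i = F (inord 0) + F (inord 1) + F (inord 2) + F (inord 3).
Proof.
by rewrite !big_ord_recl big_ord0 addr0 !addrA ord4_3 ord4_2 ord4_1 ord4_0.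
Qed.

Lemma ord4_cases (i : 'I_4) : i = inord 0 \/ i = inord 1 \/ i = inord 2 \/ i = inord 3.
Proof.
case: i => [[|[|[|[|n]]]] Hi].
- by left; apply/val_inj; rewrite /= inordK.
- by right; left; apply/val_inj; rewrite /= inordK.
- by right; right; left; apply/val_inj; rewrite /= inordK.
- by right; right; right; apply/val_inj; rewrite /= inordK.
- by [].
Qed.

Definition mksf (a b c d e f : R) (i j : nat) : R :=
  match i, j with
  | 0, 1 => a | 1, 0 => - a | 0, 2 => b | 2, 0 => - b | 0, 3 => c | 3, 0 => - c
  | 1, 2 => d | 2, 1 => - d | 1, 3 => e | 3, 1 => - e | 2, 3 => f | 3, 2 => - f
  | _, _ => 0 end.
Arguments mksf a b c d e f i%_N j%_N.

Definition mks a b c d e f : 'M[R]_4 := \matrix_(i < 4, j < 4) mksf a b c d e f i j.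

Lemma mksE a b c d e f i j : (i < 4)%N -> (j < 4)%N ->
  mks a b c d e f (inord i) (inord j) = mksf a b c d e f i j.
Proof. by move=> Hi Hj; rewrite mxE !inordK. Qed.

Definition en (M : 'M[R]_4) (i j : nat) := M (inord i) (inord j).
Arguments en M i%_N j%_N.

Lemma skewE (A : 'M[R]_4) : A^T = - A ->
  A = mks (en A 0 1) (en A 0 2) (en A 0 3) (en A 1 2) (en A 1 3) (en A 2 3).
Proof.
move=> HA.
have T i j : A j i = - A i j by have := congr1 (fun M : 'M[R]_4 => M i j) HA; rewrite !mxE.
have D i : A i i = 0.
  have := T i i; move/eqP; rewrite -subr_eq0 opprK -mulr2n mulrn_eq0 /=.
  by move/eqP.
apply/matrixP => i j.
have [->|[->|[->|->]]] := ord4_cases i; have [->|[->|[->|->]]] := ord4_cases j;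
  rewrite mksE //= /en ?D // T //.
Qed.

Lemma det4f (f : nat -> nat -> R) : \det (\matrix_(i < 4, j < 4) f i j) =
  f 0 0 * (f 1 1 * f 2 2 * f 3 3 - f 1 1 * f 2 3 * f 3 2 - f 1 2 * f 2 1 * f 3 3
  + f 1 2 * f 2 3 * f 3 1 + f 1 3 * f 2 1 * f 3 2 - f 1 3 * f 2 2 * f 3 1)
  - f 0 1 * (f 1 0 * f 2 2 * f 3 3 - f 1 0 * f 2 3 * f 3 2 - f 1 2 * f 2 0 * f 3 3
  + f 1 2 * f 2 3 * f 3 0 + f 1 3 * f 2 0 * f 3 2 - f 1 3 * f 2 2 * f 3 0)
  + f 0 2 * (f 1 0 * f 2 1 * f 3 3 - f 1 0 * f 2 3 * f 3 1 - f 1 1 * f 2 0 * f 3 3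
  + f 1 1 * f 2 3 * f 3 0 + f 1 3 * f 2 0 * f 3 1 - f 1 3 * f 2 1 * f 3 0)
  - f 0 3 * (f 1 0 * f 2 1 * f 3 2 - f 1 0 * f 2 2 * f 3 1 - f 1 1 * f 2 0 * f 3 2
  + f 1 1 * f 2 2 * f 3 0 + f 1 2 * f 2 0 * f 3 1 - f 1 2 * f 2 1 * f 3 0).
Proof.
have det3f (g : nat -> nat -> R) : \det (\matrix_(i < 3, j < 3) g i j) =
  g 0 0 * g 1 1 * g 2 2 - g 0 0 * g 1 2 * g 2 1 - g 0 1 * g 1 0 * g 2 2
  + g 0 1 * g 1 2 * g 2 0 + g 0 2 * g 1 0 * g 2 1 - g 0 2 * g 1 1 * g 2 0.
  rewrite (expand_det_row _ 0) !big_ord_recl big_ord0 /cofactor.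
  do 3 rewrite (expand_det_row _ 0) !big_ord_recl big_ord0 /cofactor !det_mx11.
  rewrite !mxE /= /bump /=. rewrite !expr0 !expr1 !exprS !expr0. ring.
have minor4 (j : 'I_4) :
  \det (row' 0 (col' j (\matrix_(i < 4, j < 4) f i j))) =
  let g := fun a b => f (bump 0 a) (bump j b) in
  g 0 0 * g 1 1 * g 2 2 - g 0 0 * g 1 2 * g 2 1 - g 0 1 * g 1 0 * g 2 2
  + g 0 1 * g 1 2 * g 2 0 + g 0 2 * g 1 0 * g 2 1 - g 0 2 * g 1 1 * g 2 0.
  rewrite /=; etransitivity; last exact: (det3f (fun a b => f (bump 0 a) (bump j b))).
  by congr (\det _); apply/matrixP => a b; rewrite !mxE.
rewrite (expand_det_row _ 0) !big_ord_recl big_ord0 /cofactor !minor4.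
rewrite !mxE /= /bump /= !expr0 !expr1 !exprS !expr0. ring.
Qed.

Lemma det4 (M : 'M[R]_4) : \det M = \det (\matrix_(i < 4, j < 4) en M i j).
Proof.
congr (\det _); apply/matrixP => i j; rewrite !mxE.
by rewrite /en !inord_val.
Qed.

Definition Pf (A : 'M[R]_4) := en A 0 1 * en A 2 3 - en A 0 2 * en A 1 3 + en A 0 3 * en A 1 2.
Definition qf (A B : 'M[R]_4) :=
  en A 0 1 * en B 2 3 + en A 2 3 * en B 0 1 - en A 0 2 * en B 1 3 - en A 1 3 * en B 0 2
  + en A 0 3 * en B 1 2 + en A 1 2 * en B 0 3.

Lemma enmks a b c d e f i j : (i < 4)%N -> (j < 4)%N ->
  en (mks a b c d e f) i j = mksf a b c d e f i j.
Proof. exact: mksE. Qed.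

Lemma en_mul (A B : 'M[R]_4) i j :
  en (A *m B) i j = en A i 0 * en B 0 j + en A i 1 * en B 1 j + en A i 2 * en B 2 j
    + en A i 3 * en B 3 j.
Proof. by rewrite /en mxE sum4. Qed.

Lemma en_tr (A : 'M[R]_4) i j : en A^T i j = en A j i.
Proof. by rewrite /en mxE. Qed.

Lemma Pf_transform (P : 'M[R]_4) a b c d e f :
  Pf (P *m mks a b c d e f *m P^T) = \det P * Pf (mks a b c d e f).
Proof.
rewrite det4 det4f /Pf !en_mul !en_tr !enmks //=. rewrite /en. ring.
Qed.

End L1.

Section L2.
Variable R : rcfType.

Lemma sum4c (P : pred 'I_4) (F : 'I_4 -> R) :
  \sum_(i < 4 | P i) F i = (if P (inord 0) then F (inord 0) else 0)
   + (if P (inord 1) then F (inord 1) else 0) + (if P (inord 2) then F (inord 2) else 0)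
   + (if P (inord 3) then F (inord 3) else 0).
Proof. by rewrite big_mkcond sum4. Qed.

Lemma inord_eq4 i j : (i < 4)%N -> (j < 4)%N -> (inord i == inord j :> 'I_4) = (i == j).
Proof.
move=> Hi Hj; apply/eqP/eqP => [H|->//].
by have := congr1 val H; rewrite /= !inordK.
Qed.

Definition epsf (a b c d : nat) (i j : nat) : R := if nth a [:: a; b; c; d] i == j then 1 else 0.

Definition lc (a b c d : nat) : R :=
  match a, b, c, d with
  | 0, 1, 2, 3 => 1
  | 0, 1, 3, 2 => -1
  | 0, 2, 1, 3 => -1
  | 0, 2, 3, 1 => 1
  | 0, 3, 1, 2 => 1
  | 0, 3, 2, 1 => -1
  | 1, 0, 2, 3 => -1
  | 1, 0, 3, 2 => 1
  | 1, 2, 0, 3 => 1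
  | 1, 2, 3, 0 => -1
  | 1, 3, 0, 2 => -1
  | 1, 3, 2, 0 => 1
  | 2, 0, 1, 3 => 1
  | 2, 0, 3, 1 => -1
  | 2, 1, 0, 3 => -1
  | 2, 1, 3, 0 => 1
  | 2, 3, 0, 1 => 1
  | 2, 3, 1, 0 => -1
  | 3, 0, 1, 2 => -1
  | 3, 0, 2, 1 => 1
  | 3, 1, 0, 2 => 1
  | 3, 1, 2, 0 => -1
  | 3, 2, 0, 1 => -1
  | 3, 2, 1, 0 => 1
  | _, _, _, _ => 0 end.

Lemma det_epsf a b c d : (a < 4)%N -> (b < 4)%N -> (c < 4)%N -> (d < 4)%N ->
  \det (\matrix_(i < 4, j < 4) epsf a b c d i j) = lc a b c d.
Proof.
move=> Ha Hb Hc Hd; rewrite det4f /epsf.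
case: a Ha => [|[|[|[|a]]]] Ha //; case: b Hb => [|[|[|[|b]]]] Hb //;
case: c Hc => [|[|[|[|c]]]] Hc //; case: d Hd => [|[|[|[|d]]]] Hd //=; ring.
Qed.

Lemma vol_eb (m : R) a b c d : (a < 4)%N -> (b < 4)%N -> (c < 4)%N -> (d < 4)%N ->
  vol m (quad (ebasis R (inord a)) (ebasis R (inord b)) (ebasis R (inord c)) (ebasis R (inord d)))
  = m * lc a b c d.
Proof.
move=> Ha Hb Hc Hd; rewrite /vol -det_epsf //; congr (_ * _); rewrite det4; congr (\det _).
apply/matrixP => i j; rewrite !mxE /en /epsf /quad !mxE !inordK //.
case: i => [[|[|[|[|n]]]] Hi] //=; rewrite mxE /= inord_eq4 // eq_sym; by case: (_ == _).
Qed.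

Lemma Phi_mks (m a b c d e f : R) : Phi m (mks a b c d e f) (mks a b c d e f) =
  2%:R * m * Pf (mks a b c d e f).
Proof.
rewrite /Phi sum4 !sum4c !inordK //= ?sum4 ?sum4c ?inordK //=.
rewrite !vol_eb // /Pf /en !mksE //=.
ring.
Qed.

End L2.

Section L3.
Variable R : rcfType.

Lemma sum_delta (x : 'I_4) (H : 'I_4 -> R) : \sum_(i < 4) (i == x)%:R * H i = H x.
Proof.
rewrite (bigD1 x) //= eqxx mul1r big1 ?addr0 // => i /negbTE ->; by rewrite mul0r.
Qed.

Definition epsO (a b c d : 'I_4) : R :=
  \det (\matrix_(r < 4, col < 4) (quad a b c d r == col)%:R).

Lemma sumS4 (G : 'I_4 -> 'I_4 -> 'I_4 -> 'I_4 -> R) :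
  \sum_(s : 'S_4) (-1) ^+ s * G (s (inord 0)) (s (inord 1)) (s (inord 2)) (s (inord 3))
  = \sum_(a < 4) \sum_(b < 4) \sum_(c < 4) \sum_(d < 4) epsO a b c d * G a b c d.
Proof.
have E (s : 'S_4) : G (s (inord 0)) (s (inord 1)) (s (inord 2)) (s (inord 3)) =
  \sum_(a < 4) \sum_(b < 4) \sum_(c < 4) \sum_(d < 4)
    (\prod_(r < 4) (quad a b c d r == (s : 'S_4) r)%:R) * G a b c d.
  have P a b c d : \prod_(r < 4) ((quad a b c d r == (s : 'S_4) r)%:R : R) =
    (d == s (inord 3))%:R * ((c == s (inord 2))%:R * ((b == s (inord 1))%:R * (a == s (inord 0))%:R)).
    rewrite !big_ord_recl big_ord0 mulr1 ord4_3 ord4_2 ord4_1 ord4_0 /quad !inordK //=.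
    ring.
  under eq_bigr => a _ do under eq_bigr => b _ do under eq_bigr => c _ do
    under eq_bigr => d _ do rewrite P -!mulrA.
  idtac "S1".
  under eq_bigr => a _ do under eq_bigr => b _ do under eq_bigr => c _ do
    rewrite sum_delta.
  under eq_bigr => a _ do under eq_bigr => b _ do rewrite sum_delta.
  under eq_bigr => a _ do rewrite sum_delta.
  by rewrite sum_delta.
under eq_bigr => s _ do (rewrite E mulr_sumr; under eq_bigr => a _ do (rewrite mulr_sumr;
  under eq_bigr => b _ do (rewrite mulr_sumr; under eq_bigr => c _ do rewrite mulr_sumr))).
idtac "S3".
rewrite exchange_big; apply: eq_bigr => a _.
rewrite exchange_big; apply: eq_bigr => b _.
rewrite exchange_big; apply: eq_bigr => c _.
rewrite exchange_big; apply: eq_bigr => d _.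
rewrite /epsO /determinant big_distrl; apply: eq_bigr => s _.
rewrite mulrA; congr (_ * _ * _); apply: eq_bigr => r _; by rewrite mxE.
Qed.

End L3.

Section L4.
Variable R : rcfType.

Lemma quad_eb (t : 'I_4) :
  quad (ebasis R (inord 0)) (ebasis R (inord 1)) (ebasis R (inord 2)) (ebasis R (inord 3)) t
  = ebasis R t.
Proof. by have [->|[->|[->|->]]] := ord4_cases t; rewrite /quad inordK. Qed.

Lemma form2_eb (A : 'M[R]_4) i j : form2 A (ebasis R i) (ebasis R j) = A i j.
Proof.
rewrite /form2 (bigD1 i) //= [X in _ + X]big1 => [|k Hk]; last first.
  rewrite big1 // => l _; rewrite !mxE /=.
  by move: Hk; rewrite /= => /negbTE ->; rewrite !mul0r.
rewrite addr0 (bigD1 j) //= big1 => [|l Hl]; last first.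
  by move: Hl; rewrite !mxE /= => /negbTE ->; rewrite mulr0 mul0r.
by rewrite !mxE !eqxx /= !mul1r addr0.
Qed.

Lemma epsO_E a b c d : (a < 4)%N -> (b < 4)%N -> (c < 4)%N -> (d < 4)%N ->
  epsO R (inord a) (inord b) (inord c) (inord d) = lc R a b c d.
Proof.
move=> Ha Hb Hc Hd; rewrite /epsO -det_epsf // det4; congr (\det _).
apply/matrixP => i j; rewrite !mxE /en !mxE /epsf /quad !inordK //.
case: i => [[|[|[|[|n]]]] Hi] //=; rewrite inord_eq4 //; by case: (_ == _).
Qed.

Lemma wedge_mks (a b c d e f : R) :
  wedge22 (mks a b c d e f) (mks a b c d e f)
    (quad (ebasis R (inord 0)) (ebasis R (inord 1)) (ebasis R (inord 2)) (ebasis R (inord 3)))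
  = 2%:R * Pf (mks a b c d e f).
Proof.
rewrite /wedge22.
under eq_bigr => s _ do rewrite !quad_eb !form2_eb -mulrA.
have := sumS4 (fun i j k l => mks a b c d e f i j * mks a b c d e f k l).
move=> /= ->.
rewrite !sum4 !epsO_E // /Pf /en !mksE //=.
by field.
Qed.

End L4.

Section L5.
Variable R : rcfType.
Notation vec := 'rV[R]_4.

Lemma form2M (A : 'M[R]_4) (x y : vec) : form2 A x y = (x *m A *m y^T) 0 0.
Proof.
rewrite /form2 !mxE; under [RHS]eq_bigr do rewrite !mxE big_distrl.
rewrite exchange_big; apply: eq_bigr => i _; apply: eq_bigr => j _.
by rewrite /= mulrAC.
Qed.

Lemma form2_mulmx (A P : 'M[R]_4) (x y : vec) :
  form2 A (x *m P) (y *m P) = form2 (P *m A *m P^T) x y.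
Proof. by rewrite !form2M trmx_mul !mulmxA. Qed.

Lemma form2_skew (A : 'M[R]_4) x y : A^T = - A -> form2 A x y = - form2 A y x.
Proof.
move=> HA; rewrite !form2M.
have -> : (x *m A *m y^T) 0 0 = ((x *m A *m y^T)^T) 0 0 by rewrite [X in _ = X]mxE.
by rewrite !trmx_mul trmxK HA mulNmx mulmxN mxE mulmxA.
Qed.

Lemma form2_xx (A : 'M[R]_4) x : A^T = - A -> form2 A x x = 0.
Proof.
move=> HA; have := form2_skew x x HA; move/eqP; rewrite -subr_eq0 opprK -mulr2n.
by rewrite mulrn_eq0 /= => /eqP.
Qed.

Lemma form2Nl (A : 'M[R]_4) x y : form2 A (- x) y = - form2 A x y.
Proof. by rewrite !form2M mulNmx mulNmx mxE. Qed.
Lemma form2Nr (A : 'M[R]_4) x y : form2 A x (- y) = - form2 A x y.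
Proof. by rewrite !form2M linearN /= mulmxN mxE. Qed.
Lemma form2Zr (A : 'M[R]_4) a x y : form2 A x (a *: y) = a * form2 A x y.
Proof. by rewrite !form2M linearZ /= -scalemxAr mxE. Qed.
Lemma form2Zl (A : 'M[R]_4) a x y : form2 A (a *: x) y = a * form2 A x y.
Proof. by rewrite !form2M -!scalemxAl mxE. Qed.
Lemma form2Dr (A : 'M[R]_4) x y z : form2 A x (y + z) = form2 A x y + form2 A x z.
Proof. by rewrite !form2M linearD /= mulmxDr mxE. Qed.
Lemma form2Dl (A : 'M[R]_4) x y z : form2 A (x + y) z = form2 A x z + form2 A y z.
Proof. by rewrite !form2M !mulmxDl mxE. Qed.
Lemma form2DA (A B : 'M[R]_4) x y : form2 (A + B) x y = form2 A x y + form2 B x y.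
Proof. by rewrite !form2M mulmxDr mulmxDl mxE. Qed.
Lemma form2ZA (A : 'M[R]_4) a x y : form2 (a *: A) x y = a * form2 A x y.
Proof. by rewrite !form2M -scalemxAr -scalemxAl mxE. Qed.
Lemma form2NA (A : 'M[R]_4) x y : form2 (- A) x y = - form2 A x y.
Proof. by rewrite !form2M mulmxN mulNmx mxE. Qed.
Lemma form2_0A x y : form2 (0 : 'M[R]_4) x y = 0.
Proof. by rewrite !form2M mulmx0 mul0mx mxE. Qed.

Lemma closed2_lin c (A B : 'M[R]_4) (a : R) :
  closed2 c A -> closed2 c B -> closed2 c (a *: A + B).
Proof.
move=> [HA dA] [HB dB]; split.
  by rewrite /is_2form linearD linearZ /= HA HB scalerN opprD.
move=> x y z; rewrite /d2 !form2DA !form2ZA.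
have := dA x y z; have := dB x y z; rewrite /d2 => e1 e2.
transitivity (a * (- form2 A (lie_br c x y) z + form2 A (lie_br c x z) y
  - form2 A (lie_br c y z) x) + (- form2 B (lie_br c x y) z + form2 B (lie_br c x z) y
  - form2 B (lie_br c y z) x)); first ring.
by rewrite e1 e2 mulr0 addr0.
Qed.

Lemma closed2_0 c : closed2 c (0 : 'M[R]_4).
Proof.
split; first by rewrite /is_2form trmx0 oppr0.
by move=> x y z; rewrite /d2 !form2_0A; ring.
Qed.

Definition mkv (x0 x1 x2 x3 : R) : vec := \row_(j < 4) nth 0 [:: x0; x1; x2; x3] j.

Lemma mkvE x0 x1 x2 x3 i : (i < 4)%N -> mkv x0 x1 x2 x3 0 (inord i) = nth 0 [:: x0; x1; x2; x3] i.
Proof. by move=> Hi; rewrite mxE inordK. Qed.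

Definition ev (u : vec) i := u 0 (inord i).
Arguments ev u i%_N.

Lemma vec_eq0 (u : vec) : ev u 0 = 0 -> ev u 1 = 0 -> ev u 2 = 0 -> ev u 3 = 0 -> u = 0.
Proof.
move=> h0 h1 h2 h3; apply/matrixP => i j; rewrite mxE (ord1 i).
by have [->|[->|[->|->]]] := ord4_cases j.
Qed.

Lemma vec_neq0 (u : vec) : u != 0 ->
  ev u 0 != 0 \/ ev u 1 != 0 \/ ev u 2 != 0 \/ ev u 3 != 0.
Proof.
move=> Hu; case: (eqVneq (ev u 0) 0) => h0; last by left.
case: (eqVneq (ev u 1) 0) => h1; last by right; left.
case: (eqVneq (ev u 2) 0) => h2; last by right; right; left.
case: (eqVneq (ev u 3) 0) => h3; last by right; right; right.
by move: Hu; rewrite (vec_eq0 h0 h1 h2 h3) eqxx.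
Qed.

Definition J0 : 'M[R]_4 := mks 1 0 0 0 0 1.

Lemma evM (u : vec) (M : 'M[R]_4) i : ev (u *m M) i =
  ev u 0 * en M 0 i + ev u 1 * en M 1 i + ev u 2 * en M 2 i + ev u 3 * en M 3 i.
Proof. by rewrite /ev mxE sum4. Qed.

Lemma form2E (A : 'M[R]_4) x y : form2 A x y =
  \sum_(i < 4) \sum_(j < 4) x 0 i * y 0 j * A i j.
Proof. by []. Qed.

Lemma form2_exp (A : 'M[R]_4) x y : form2 A x y =
  let f i j := ev x i * ev y j * en A i j in
  f 0 0 + f 0 1 + f 0 2 + f 0 3 + (f 1 0 + f 1 1 + f 1 2 + f 1 3) +
  (f 2 0 + f 2 1 + f 2 2 + f 2 3) + (f 3 0 + f 3 1 + f 3 2 + f 3 3).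
Proof. by rewrite /form2 !sum4. Qed.

Definition gq (a b c d e f : R) (u : vec) :=
  a * (ev u 0 ^+ 2 + ev u 1 ^+ 2) + f * (ev u 2 ^+ 2 + ev u 3 ^+ 2)
  + (b + e) * (ev u 1 * ev u 2 - ev u 0 * ev u 3)
  + (c - d) * (ev u 0 * ev u 2 + ev u 1 * ev u 3).

Lemma gqE a b c d e f u : form2 (mks a b c d e f) u (u *m J0) = gq a b c d e f u.
Proof.
rewrite form2_exp /= !evM /J0 /gq /en !mksE //=; ring.
Qed.

End L5.
Arguments J0 {R}.

Section L6.
Variable R : rcfType.
Notation vec := 'rV[R]_4.

Lemma ev_mkv (x0 x1 x2 x3 : R) :
  [/\ ev (mkv x0 x1 x2 x3) 0 = x0, ev (mkv x0 x1 x2 x3) 1 = x1,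
      ev (mkv x0 x1 x2 x3) 2 = x2 & ev (mkv x0 x1 x2 x3) 3 = x3].
Proof. by rewrite /ev !mkvE. Qed.

Lemma ev0 i : ev (0 : vec) i = 0.
Proof. by rewrite /ev mxE. Qed.

Lemma neq0_ev (u : vec) i : ev u i != 0 -> u != 0.
Proof. by apply: contraNN => /eqP ->; rewrite ev0. Qed.

Lemma mkv_neq0 (x0 x1 x2 x3 : R) : x0 != 0 -> mkv x0 x1 x2 x3 != 0.
Proof.
move=> H; apply: (@neq0_ev _ 0); have [-> _ _ _] := ev_mkv x0 x1 x2 x3; exact: H.
Qed.

Lemma C1 (a b c d e f : R) : (forall u : vec, u != 0 -> 0 < gq a b c d e f u) ->
  [/\ 0 < a, 0 < f & (b + e) ^+ 2 + (c - d) ^+ 2 < 4%:R * a * f].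
Proof.
move=> H.
have Ha : 0 < a.
  have := H (mkv 1 0 0 0) (mkv_neq0 _ _ _ (oner_neq0 R)).
  by rewrite /gq; have [-> -> -> ->] := ev_mkv 1 0 0 0; rewrite !expr2; lra.
have Hf : 0 < f.
  have u0 : mkv (0:R) 0 1 0 != 0.
    by apply: (@neq0_ev _ 2); have [_ _ -> _] := ev_mkv (0:R) 0 1 0; rewrite oner_eq0.
  have := H _ u0.
  by rewrite /gq; have [-> -> -> ->] := ev_mkv 0 0 1 0; rewrite !expr2; lra.
split=> //.
have f2 : 2%:R * f != 0 by rewrite mulf_neq0 // ?pnatr_eq0 // gt_eqF.
have := H _ (mkv_neq0 0 (- (c - d)) (b + e) f2).
rewrite /gq; have [-> -> -> ->] := ev_mkv (2%:R * f) 0 (- (c - d)) (b + e).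
move=> Hp.
have : 0 < f * (4%:R * a * f - ((b + e) ^+ 2 + (c - d) ^+ 2)).
  move: Hp; rewrite !expr2 => Hp. 
  have -> : f * (4%:R * a * f - ((b + e) * (b + e) + (c - d) * (c - d))) =
    a * (2%:R * f * (2%:R * f) + 0 * 0) + f * (- (c - d) * - (c - d) + (b + e) * (b + e)) +
    (b + e) * (0 * - (c - d) - 2%:R * f * (b + e)) +
    (c - d) * (2%:R * f * - (c - d) + 0 * (b + e)) by ring.
  exact: Hp.
by rewrite pmulr_rgt0 // subr_gt0.
Qed.

Lemma C2 (a b c d e f : R) : 0 < a -> (b + e) ^+ 2 + (c - d) ^+ 2 < 4%:R * a * f ->
  forall u : vec, u != 0 -> 0 < gq a b c d e f u.
Proof.
move=> Ha Hd u Hu.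
set x := (b + e) / 2%:R; set y := (c - d) / 2%:R.
set u0 := ev u 0; set u1 := ev u 1; set u2 := ev u 2; set u3 := ev u 3.
have E : a * gq a b c d e f u = (a * u0 - x * u3 + y * u2) ^+ 2 + (a * u1 + x * u2 + y * u3) ^+ 2
   + (a * f - x ^+ 2 - y ^+ 2) * (u2 ^+ 2 + u3 ^+ 2).
  rewrite /gq /x /y -/u0 -/u1 -/u2 -/u3; field; by rewrite ?pnatr_eq0.
have HD : 0 < a * f - x ^+ 2 - y ^+ 2.
  rewrite /x /y; move: Hd; rewrite !expr2 => Hd.
  have -> : a * f - (b + e) / 2%:R * ((b + e) / 2%:R) - (c - d) / 2%:R * ((c - d) / 2%:R) =
    (4%:R * a * f - ((b + e) * (b + e) + (c - d) * (c - d))) / 4%:R by field; rewrite ?pnatr_eq0.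
  by rewrite divr_gt0 // ?subr_gt0 // ltr0n.
suff : 0 < a * gq a b c d e f u by rewrite pmulr_rgt0.
rewrite E.
set Q1 := (a * u0 - x * u3 + y * u2) ^+ 2.
set Q2 := (a * u1 + x * u2 + y * u3) ^+ 2.
have s1 : 0 <= Q1 by rewrite sqr_ge0.
have s2 : 0 <= Q2 by rewrite sqr_ge0.
have s3 : 0 <= u2 ^+ 2 by rewrite sqr_ge0.
have s4 : 0 <= u3 ^+ 2 by rewrite sqr_ge0.
have s5 : 0 <= (a * f - x ^+ 2 - y ^+ 2) * (u2 ^+ 2 + u3 ^+ 2).
  by apply: mulr_ge0; [exact: ltW | exact: addr_ge0].
rewrite ltNge; apply/negP => Hle.
have eQ1 : Q1 = 0 by lra.
have eQ2 : Q2 = 0 by lra.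
have eD : (a * f - x ^+ 2 - y ^+ 2) * (u2 ^+ 2 + u3 ^+ 2) = 0 by lra.
move/eqP: eD; rewrite mulf_eq0 gt_eqF //= => /eqP eS.
have e2 : u2 = 0 by apply/eqP; rewrite -sqrf_eq0; apply/eqP; lra.
have e3 : u3 = 0 by apply/eqP; rewrite -sqrf_eq0; apply/eqP; lra.
move: eQ1 eQ2; rewrite /Q1 /Q2 e2 e3 !mulr0 !addr0 subr0 => /eqP; rewrite sqrf_eq0 mulf_eq0 gt_eqF //= => /eqP e0.
move/eqP; rewrite sqrf_eq0 mulf_eq0 gt_eqF //= => /eqP e1.
by move: Hu; rewrite (vec_eq0 e0 e1 e2 e3) eqxx.
Qed.

Lemma C3 (a b c d e f : R) :
  (forall v w : vec, form2 (mks a b c d e f) (v *m J0) (w *m J0) = form2 (mks a b c d e f) v w)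
  -> b = e /\ c = - d.
Proof.
move=> H; split.
  have := H (mkv 1 0 0 0) (mkv 0 0 1 0).
  rewrite !form2_exp /= !evM /J0 /en !mksE //=.
  have [-> -> -> ->] := ev_mkv (1:R) 0 0 0; have [-> -> -> ->] := ev_mkv (0:R) 0 1 0.
  lra.
have := H (mkv 1 0 0 0) (mkv 0 0 0 1).
rewrite !form2_exp /= !evM /J0 /en !mksE //=.
have [-> -> -> ->] := ev_mkv (1:R) 0 0 0; have [-> -> -> ->] := ev_mkv (0:R) 0 0 1.
lra.
Qed.

Lemma C3inv (a b c d e f : R) : b = e -> c = - d ->
  forall v w : vec, form2 (mks a b c d e f) (v *m J0) (w *m J0) = form2 (mks a b c d e f) v w.
Proof.
move=> -> -> v w; rewrite !form2_exp /= !evM /J0 /en !mksE //=; ring.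
Qed.

Lemma unit_neq0 (P : 'M[R]_4) (u : vec) : P \in unitmx -> u != 0 -> u *m P != 0.
Proof.
move=> HP Hu; apply: contraNN Hu => /eqP E.
by rewrite -(mulmxK HP u) E mul0mx.
Qed.

Lemma tamed_tr (A J P : 'M[R]_4) : P \in unitmx -> P *m J = J0 *m P ->
  tamed A J <-> forall u : vec, u != 0 -> 0 < form2 (P *m A *m P^T) u (u *m J0).
Proof.
move=> HP HJ; split => H u Hu.
  have := H _ (unit_neq0 HP Hu).
  by rewrite -mulmxA HJ mulmxA form2_mulmx.
have Hu' : u *m invmx P != 0 by apply: unit_neq0 => //; rewrite unitmx_inv.
have := H _ Hu'.
rewrite -form2_mulmx !mulmxKV //.
have E (x : vec) : x *m invmx P *m J0 *m P = x *m J.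
  by rewrite -mulmxA -HJ mulmxA mulmxKV.
by rewrite E.
Qed.

Lemma inv_tr (A J P : 'M[R]_4) : P \in unitmx -> P *m J = J0 *m P ->
  (forall v w : vec, form2 A (v *m J) (w *m J) = form2 A v w) <->
  (forall v w : vec, form2 (P *m A *m P^T) (v *m J0) (w *m J0) = form2 (P *m A *m P^T) v w).
Proof.
move=> HP HJ; split => H v w.
  by rewrite -!form2_mulmx -!mulmxA -HJ !mulmxA H.
have := H (v *m invmx P) (w *m invmx P).
rewrite -!form2_mulmx !mulmxKV //.
have E (x : vec) : x *m invmx P *m J0 *m P = x *m J.
  by rewrite -mulmxA -HJ mulmxA mulmxKV.
by rewrite !E.
Qed.

End L6.

Section L7.
Variable R : rcfType.
Notation vec := 'rV[R]_4.
Implicit Types (a b c d e f t : R).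

Ltac mx4 := apply/matrixP => i j;
  have [->|[->|[->|->]]] := ord4_cases i; have [->|[->|[->|->]]] := ord4_cases j.

Lemma en_scal1 t i j : (i < 4)%N -> (j < 4)%N ->
  en (t *: 1%:M : 'M[R]_4) i j = if i == j then t else 0.
Proof.
move=> Hi Hj; rewrite /en !mxE inord_eq4 //.
by case: (i == j); rewrite ?mulr1 ?mulr0.
Qed.

Definition hodge (U : 'M[R]_4) :=
  mks (en U 2 3) (- en U 1 3) (en U 1 2) (en U 0 3) (- en U 0 2) (en U 0 1).

Lemma hodge_mks a b c d e f : hodge (mks a b c d e f) = mks f (- e) d c (- b) a.
Proof. by rewrite /hodge /en !mksE. Qed.

Lemma mks_add a b c d e f (a' b' c' d' e' f' : R) :
  mks a b c d e f + mks a' b' c' d' e' f' = mks (a + a') (b + b') (c + c') (d + d') (e + e') (f + f').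
Proof. mx4; rewrite !mxE ?inordK //=; ring. Qed.

Lemma mks_scale t a b c d e f :
  t *: mks a b c d e f = mks (t * a) (t * b) (t * c) (t * d) (t * e) (t * f).
Proof. mx4; rewrite !mxE ?inordK //=; ring. Qed.

Lemma mks_opp a b c d e f : - mks a b c d e f = mks (- a) (- b) (- c) (- d) (- e) (- f).
Proof. mx4; rewrite !mxE ?inordK //=; ring. Qed.

Lemma mks_tr a b c d e f : (mks a b c d e f)^T = - mks a b c d e f.
Proof. mx4; rewrite !mxE ?inordK //=; ring. Qed.

Lemma Pf_mks a b c d e f : Pf (mks a b c d e f) = a * f - b * e + c * d.
Proof. by rewrite /Pf /en !mksE. Qed.

Lemma qf_mks a b c d e f (a' b' c' d' e' f' : R) : qf (mks a b c d e f) (mks a' b' c' d' e' f') =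
  a * f' + f * a' - b * e' - e * b' + c * d' + d * c'.
Proof. by rewrite /qf /en !mksE. Qed.

Lemma hodge_mul a b c d e f :
  mks a b c d e f *m hodge (mks a b c d e f) = - Pf (mks a b c d e f) *: 1%:M.
Proof.
rewrite hodge_mks Pf_mks; mx4; rewrite -[X in X = _]/(en _ _ _) -[X in _ = X]/(en _ _ _);
  rewrite en_mul en_scal1 // /en !mksE //=; ring.
Qed.

Lemma hodge_mul' a b c d e f :
  hodge (mks a b c d e f) *m mks a b c d e f = - Pf (mks a b c d e f) *: 1%:M.
Proof.
rewrite hodge_mks Pf_mks; mx4; rewrite -[X in X = _]/(en _ _ _) -[X in _ = X]/(en _ _ _);
  rewrite en_mul en_scal1 // /en !mksE //=; ring.
Qed.

Lemma hodge_polar a b c d e f (a' b' c' d' e' f' : R) :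
  mks a b c d e f *m hodge (mks a' b' c' d' e' f') + mks a' b' c' d' e' f' *m hodge (mks a b c d e f)
  = - qf (mks a b c d e f) (mks a' b' c' d' e' f') *: 1%:M.
Proof.
rewrite !hodge_mks qf_mks; mx4; rewrite -[X in X = _]/(en _ _ _) -[X in _ = X]/(en _ _ _);
  rewrite /en mxE -!/(en _ _ _) !en_mul en_scal1 // /en !mksE //=; ring.
Qed.

Lemma det_mks a b c d e f : \det (mks a b c d e f) = Pf (mks a b c d e f) ^+ 2.
Proof. by rewrite det4 det4f Pf_mks /en !mksE //=; ring. Qed.

Lemma J0J0 : (J0 : 'M[R]_4) *m J0 = - 1%:M.
Proof.
rewrite /J0 -scaleN1r; mx4; rewrite -[X in X = _]/(en _ _ _) -[X in _ = X]/(en _ _ _);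
  rewrite en_mul en_scal1 // /en !mxE ?inordK //=; ring.
Qed.

Lemma pair2_mks a b c d e f (a' b' c' d' e' f' : R) :
  pair2 (mks a b c d e f) (mks a' b' c' d' e' f') =
  a * a' + b * b' + c * c' + d * d' + e * e' + f * f'.
Proof.
rewrite /pair2 sum4 !sum4c !inordK //= !mksE //=; ring.
Qed.

Lemma pair2_hodge (A U : 'M[R]_4) : A^T = - A -> U^T = - U ->
  pair2 A U = qf A (hodge U).
Proof.
move=> /skewE -> /skewE ->; rewrite hodge_mks pair2_mks qf_mks; ring.
Qed.

Lemma Pf_hodge (U : 'M[R]_4) : U^T = - U -> Pf (hodge U) = Pf U.
Proof. move=> /skewE ->; rewrite hodge_mks !Pf_mks; ring. Qed.

Lemma pair2_transform (P : 'M[R]_4) a b c d e f (a' b' c' d' e' f' : R) :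
  pair2 (mks a b c d e f) (P^T *m mks a' b' c' d' e' f' *m P) =
  pair2 (P *m mks a b c d e f *m P^T) (mks a' b' c' d' e' f').
Proof.
rewrite /pair2 sum4 !sum4c !inordK //= ?sum4 ?sum4c ?inordK //=.
rewrite -!/(en _ _ _) !en_mul !en_tr /en !mksE //=; ring.
Qed.

End L7.

Section Gen.
Variable R : rcfType.
Implicit Types (A B : 'M[R]_4).

Lemma hodge_mulG A : A^T = - A -> A *m hodge A = - Pf A *: 1%:M.
Proof. by move=> /skewE ->; rewrite hodge_mul. Qed.
Lemma hodge_mulG' A : A^T = - A -> hodge A *m A = - Pf A *: 1%:M.
Proof. by move=> /skewE ->; rewrite hodge_mul'. Qed.
Lemma hodge_polarG A B : A^T = - A -> B^T = - B ->
  A *m hodge B + B *m hodge A = - qf A B *: 1%:M.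
Proof. by move=> /skewE -> /skewE ->; rewrite hodge_polar. Qed.
Lemma hodge_trG A : (hodge A)^T = - hodge A.
Proof. by rewrite /hodge mks_tr. Qed.
Lemma qf_sym A B : A^T = - A -> B^T = - B -> qf A B = qf B A.
Proof. by move=> /skewE -> /skewE ->; rewrite !qf_mks; ring. Qed.
Lemma Pf_addG A B : A^T = - A -> B^T = - B -> Pf (A + B) = Pf A + Pf B + qf A B.
Proof. by move=> /skewE -> /skewE ->; rewrite mks_add !Pf_mks qf_mks; ring. Qed.
Lemma Pf_transformG (P : 'M[R]_4) A : A^T = - A -> Pf (P *m A *m P^T) = \det P * Pf A.
Proof. by move=> /skewE ->; rewrite Pf_transform. Qed.
Lemma skew_tr (P : 'M[R]_4) A : A^T = - A -> (P *m A *m P^T)^T = - (P *m A *m P^T).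
Proof. by move=> HA; rewrite !trmx_mul trmxK HA mulNmx mulmxN mulmxA. Qed.
Lemma skew_add A B : A^T = - A -> B^T = - B -> (A + B)^T = - (A + B).
Proof. by move=> HA HB; rewrite linearD /= HA HB opprD. Qed.
Lemma skew_scale (t : R) A : A^T = - A -> (t *: A)^T = - (t *: A).
Proof. by move=> HA; rewrite linearZ /= HA scalerN. Qed.
Lemma skew_opp A : A^T = - A -> (- A)^T = - (- A).
Proof. by move=> HA; rewrite linearN /= HA. Qed.
Lemma qf_transformG (P : 'M[R]_4) A B : A^T = - A -> B^T = - B ->
  qf (P *m A *m P^T) (P *m B *m P^T) = \det P * qf A B.
Proof.
move=> HA HB.
have E := Pf_addG (skew_tr P HA) (skew_tr P HB).
have E1 : P *m A *m P^T + P *m B *m P^T = P *m (A + B) *m P^T by rewrite mulmxDr mulmxDl.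
rewrite E1 !Pf_transformG ?skew_add // Pf_addG // in E.
move: E; set x := qf (P *m A *m P^T) (P *m B *m P^T) => E.
have -> : x = \det P * (Pf A + Pf B + qf A B) - \det P * Pf A - \det P * Pf B by rewrite E; ring.
ring.
Qed.
Lemma qf_linr A B C (t : R) : qf A (t *: B + C) = t * qf A B + qf A C.
Proof. rewrite /qf /en !mxE; ring. Qed.
Lemma qf_linl A B C (t : R) : qf (t *: B + C) A = t * qf B A + qf C A.
Proof. rewrite /qf /en !mxE; ring. Qed.
Lemma Pf_scale (t : R) A : Pf (t *: A) = t ^+ 2 * Pf A.
Proof. rewrite /Pf /en !mxE; ring. Qed.
Lemma form2_tr (A : 'M[R]_4) x y : form2 A x y = (x *m A *m y^T) 0 0.
Proof. exact: form2M. Qed.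

End Gen.

Section NF.
Variable R : rcfType.
Notation vec := 'rV[R]_4.
Variables S T : 'M[R]_4.
Hypothesis HS : S^T = - S.
Hypothesis HT : T^T = - T.
Hypothesis Hp : Pf S != 0.
Hypothesis HpT : Pf T = Pf S.
Hypothesis Hq : qf S T = 0.

Let p := Pf S.
Definition Km := - (p^-1) *: (T *m hodge S).

Lemma THS : T *m hodge S = - (S *m hodge T).
Proof.
have := hodge_polarG HT HS; rewrite qf_sym // Hq oppr0 scale0r => /eqP.
by rewrite addr_eq0 => /eqP.
Qed.

Lemma K1 : Km *m S = T.
Proof.
rewrite /Km -scalemxAl -mulmxA hodge_mulG' // -/p -scalemxAr mulmx1.
by rewrite scalerA mulrN mulNr opprK mulVf // scale1r.
Qed.

Lemma KtE : Km^T = - (p^-1) *: (hodge S *m T).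
Proof.
by rewrite /Km linearZ /= trmx_mul hodge_trG HT mulmxN mulNmx opprK.
Qed.

Lemma K3 : S *m Km^T = T.
Proof.
rewrite KtE -scalemxAr mulmxA hodge_mulG // -/p -scalemxAl mul1mx.
by rewrite scalerA mulrN mulNr opprK mulVf // scale1r.
Qed.

Lemma K4 : T *m Km^T = - S.
Proof.
rewrite KtE -scalemxAr mulmxA THS mulNmx -mulmxA hodge_mulG' // HpT -/p.
rewrite -scalemxAr mulmx1 scalerN scalerA mulrN mulNr opprK mulVf //.
by rewrite scale1r.
Qed.

Lemma K5 : Km *m T = - S.
Proof. by rewrite -K4 KtE /Km -scalemxAl -scalemxAr mulmxA. Qed.

Lemma S_unit : S \in unitmx.
Proof.
rewrite unitmxE unitfE; move: HS Hp => /skewE E; rewrite E det_mks -E.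
by rewrite expf_neq0.
Qed.

Lemma K2 : Km *m Km = - 1%:M.
Proof.
have E : Km *m Km *m S = (- 1%:M) *m S by rewrite -mulmxA K1 K5 mulNmx mul1mx.
by rewrite -(mulmxK S_unit (Km *m Km)) E mulmxK // S_unit.
Qed.

Implicit Types x y z : vec.
Definition dot (x y : vec) := (x *m y^T) 0 0.

Lemma dot_sym x y : dot x y = dot y x.
Proof.
rewrite /dot; have -> : (x *m y^T) 0 0 = ((x *m y^T)^T) 0 0 by rewrite [X in _ = X]mxE.
by rewrite trmx_mul trmxK.
Qed.
Lemma dotDr x y z : dot x (y + z) = dot x y + dot x z.
Proof. by rewrite /dot linearD /= mulmxDr mxE. Qed.
Lemma dotZr x y (t : R) : dot x (t *: y) = t * dot x y.
Proof. by rewrite /dot linearZ /= -scalemxAr mxE. Qed.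
Lemma dotNr x y : dot x (- y) = - dot x y.
Proof. by rewrite /dot linearN /= mulmxN mxE. Qed.
Lemma dotDl x y z : dot (x + y) z = dot x z + dot y z.
Proof. by rewrite /dot mulmxDl mxE. Qed.
Lemma dotZl x y (t : R) : dot (t *: x) y = t * dot x y.
Proof. by rewrite /dot -scalemxAl mxE. Qed.
Lemma dot0l y : dot 0 y = 0.
Proof. by rewrite /dot mul0mx mxE. Qed.
Lemma dot0r x : dot x 0 = 0.
Proof. by rewrite /dot trmx0 mulmx0 mxE. Qed.
Lemma dot_xx x : dot x x = ev x 0 ^+ 2 + ev x 1 ^+ 2 + ev x 2 ^+ 2 + ev x 3 ^+ 2.
Proof. by rewrite /dot mxE sum4 /ev !mxE !expr2. Qed.
Lemma dot_ge0 x : 0 <= dot x x.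
Proof. by rewrite dot_xx !addr_ge0 // sqr_ge0. Qed.
Lemma dot_gt0 x : x != 0 -> 0 < dot x x.
Proof.
move=> Hx; rewrite lt0r dot_ge0 andbT; apply/eqP => E.
have h0 := sqr_ge0 (ev x 0); have h1 := sqr_ge0 (ev x 1).
have h2 := sqr_ge0 (ev x 2); have h3 := sqr_ge0 (ev x 3).
rewrite dot_xx in E.
have e0 : ev x 0 = 0 by apply/eqP; rewrite -sqrf_eq0; apply/eqP; lra.
have e1 : ev x 1 = 0 by apply/eqP; rewrite -sqrf_eq0; apply/eqP; lra.
have e2 : ev x 2 = 0 by apply/eqP; rewrite -sqrf_eq0; apply/eqP; lra.
have e3 : ev x 3 = 0 by apply/eqP; rewrite -sqrf_eq0; apply/eqP; lra.
by move: Hx; rewrite (vec_eq0 e0 e1 e2 e3) eqxx.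
Qed.
Lemma dot_eq0 x : dot x x = 0 -> x = 0.
Proof.
move=> E; case: (eqVneq x 0) => // Hx.
by have := dot_gt0 Hx; rewrite E ltxx.
Qed.

Lemma form2_dot (A : 'M[R]_4) x y : form2 A x y = dot (x *m A) y.
Proof. by rewrite form2M. Qed.

Lemma F1 x y : form2 S (x *m Km) (y *m Km) = - form2 S x y.
Proof.
rewrite !form2M trmx_mul !mulmxA -(mulmxA x Km S) K1 // -(mulmxA x T) K4 //.
by rewrite mulmxN mulNmx mxE.
Qed.
Lemma F2 x y : form2 S x (y *m Km) = form2 T x y.
Proof. by rewrite !form2M trmx_mul mulmxA -(mulmxA x S) K3. Qed.
Lemma F2' x y : form2 S (x *m Km) y = form2 T x y.
Proof. by rewrite !form2M -(mulmxA x Km S) K1. Qed.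
Lemma FKK x : x *m Km *m Km = - x.
Proof. by rewrite -mulmxA K2 mulmxN mulmx1. Qed.

Let v : vec := ebasis R (inord 0).
Lemma v_neq0 : v != 0.
Proof. by apply: (@neq0_ev _ _ 0); rewrite /v /ev mxE !eqxx /= oner_eq0. Qed.

Let r1 := v *m S.
Let r2 := v *m T.
Let sc := dot r1 r2 / dot r2 r2.
Let wv := r1 - sc *: r2.

Lemma r2_wv : dot r2 wv = 0.
Proof.
rewrite /wv dotDr dotNr dotZr /sc.
case: (eqVneq (dot r2 r2) 0) => h.
  by rewrite (dot_eq0 h) dot0l dot0r; ring.
by rewrite [dot r2 r1]dot_sym divfK // subrr.
Qed.

Lemma wv_neq0 : wv != 0.
Proof.
apply/eqP => E.
have E1 : r1 = sc *: r2 by apply/eqP; rewrite -subr_eq0 -/wv E.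
have E2 : (v - sc *: (v *m Km)) *m S = 0.
  by rewrite mulmxBl -scalemxAl -mulmxA K1 // -/r1 -/r2 E1 subrr.
have E3 : v = sc *: (v *m Km).
  apply/eqP; rewrite -subr_eq0; apply/eqP.
  by rewrite -(mulmxK S_unit (v - sc *: (v *m Km))) E2 mul0mx.
have E4 : v *m Km = - sc *: v.
  by rewrite {1}E3 -scalemxAl FKK scalerN scaleNr.
have E5 : (1 + sc ^+ 2) *: v = 0.
  by rewrite scalerDl scale1r {1}E3 E4 scalerA mulrN scaleNr expr2 addNr.
have : 1 + sc ^+ 2 != 0 by rewrite gt_eqF // ltr_pwDl ?sqr_ge0.
move=> H; move/eqP: E5; rewrite scaler_eq0 (negbTE H) /= => /eqP Hv.
by move: v_neq0; rewrite Hv eqxx.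
Qed.

Lemma r1_wv : dot r1 wv = dot wv wv.
Proof.
have -> : r1 = wv + sc *: r2 by rewrite /wv subrK.
by rewrite dotDl dotZl r2_wv mulr0 addr0.
Qed.

Let w' := (dot wv wv)^-1 *: wv.

Lemma Svw : form2 S v w' = 1.
Proof.
rewrite form2_dot -/r1 /w' dotZr r1_wv mulVf //.
by rewrite gt_eqF // dot_gt0 // wv_neq0.
Qed.

Lemma SvKw : form2 S (v *m Km) w' = 0.
Proof. by rewrite F2' form2_dot -/r2 /w' dotZr r2_wv mulr0. Qed.

Definition Gm : 'M[R]_4 :=
  \matrix_(i < 4, j < 4) quad v w' (v *m Km) (- (w' *m Km)) i 0 j.

Lemma rowG (A : 'M[R]_4) i j : (Gm *m A *m Gm^T) i j =
  form2 A (quad v w' (v *m Km) (- (w' *m Km)) i) (quad v w' (v *m Km) (- (w' *m Km)) j).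
Proof.
rewrite form2M !mxE; apply: eq_bigr => k _; rewrite !mxE; congr (_ * _).
by apply: eq_bigr => l _; rewrite !mxE.
Qed.

Lemma GS : Gm *m S *m Gm^T = mks 1 0 0 0 0 1.
Proof.
rewrite (skewE (skew_tr Gm HS)) /en !rowG /quad !inordK //=.
congr (mks _ _ _ _ _ _).
- exact: Svw.
- by rewrite F2 form2_xx.
- by rewrite form2Nr F2 -F2' SvKw oppr0.
- by rewrite F2 form2_skew // -F2' SvKw oppr0.
- by rewrite form2Nr F2 form2_xx // oppr0.
- by rewrite form2Nr F1 opprK Svw.
Qed.

Lemma GT : Gm *m T *m Gm^T = mks 0 0 1 1 0 0.
Proof.
rewrite (skewE (skew_tr Gm HT)) /en !rowG /quad !inordK //=.
congr (mks _ _ _ _ _ _).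
- by rewrite -F2' SvKw.
- by rewrite -F2' form2_xx.
- by rewrite form2Nr -F2' F1 opprK Svw.
- by rewrite -F2' F1 (form2_skew _ _ HS) opprK Svw.
- by rewrite form2Nr -F2' form2_xx // oppr0.
- by rewrite form2Nr -F2' FKK form2Nl opprK F2 -F2' SvKw.
Qed.

Lemma detG : \det Gm * Pf S = 1.
Proof. by have := Pf_transformG Gm HS; rewrite GS Pf_mks => <-; ring. Qed.

Lemma G_unit : Gm \in unitmx.
Proof.
rewrite unitmxE unitfE; apply/eqP => E; have := detG; rewrite E mul0r => /eqP.
by rewrite eq_sym oner_eq0.
Qed.

Lemma G_rows : [/\ ebasis R (inord 0) *m Gm = v, ebasis R (inord 1) *m Gm = w',
  ebasis R (inord 2) *m Gm = v *m Km & ebasis R (inord 3) *m Gm = - (w' *m Km)].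
Proof.
have E i : (i < 4)%N -> ebasis R (inord i) *m Gm = quad v w' (v *m Km) (- (w' *m Km)) (inord i).
  move=> Hi; rewrite /ebasis -rowE; apply/matrixP => a b; rewrite !mxE (ord1 a) //.
by rewrite !E // /quad !inordK.
Qed.

End NF.

Section Fwd.
Variable R : rcfType.
Notation vec := 'rV[R]_4.

Lemma row_quad (G : 'M[R]_4) :
  \matrix_(i < 4, j < 4) quad (row (inord 0) G) (row (inord 1) G) (row (inord 2) G)
     (row (inord 3) G) i 0 j = G.
Proof.
apply/matrixP => i j; rewrite mxE.
by have [->|[->|[->|->]]] := ord4_cases i; rewrite /quad inordK //= mxE.
Qed.

Lemma eb_J0 : ebasis R (inord 0) *m J0 = ebasis R (inord 1) /\
              ebasis R (inord 2) *m J0 = ebasis R (inord 3).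
Proof.
split; apply/matrixP => i j; rewrite (ord1 i);
  have [->|[->|[->|->]]] := ord4_cases j; rewrite !mxE sum4 /J0 !mxE ?inord_eq4 ?inordK //=; ring.
Qed.

Lemma sandwich (G X Y : 'M[R]_4) (a : R) :
  G *m (a *: (X + Y)) *m G^T = a *: (G *m X *m G^T + G *m Y *m G^T).
Proof. by rewrite -scalemxAr -scalemxAl mulmxDr mulmxDl. Qed.

Lemma forward (c : 'I_4 -> 'I_4 -> 'I_4 -> R) (m : R) (w U : 'M[R]_4) :
  symplectic c w -> 0 < m * Pf w -> B2 c U -> 0 < m * Pf U -> tame_compatible c m -> False.
Proof.
move=> Hw Hmw [HU HUc] HmU TC.
have Hws : w^T = - w by case: Hw => [[]].
have Hwc : closed2 c w by case: Hw.
pose b := hodge U.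
have Hb : b^T = - b by exact: hodge_trG.
have Hqb : qf w b = 0 by rewrite /b -pair2_hodge // HUc.
have Pfb : Pf b = Pf U by exact: Pf_hodge.
pose p0 := Pf w.
have mn0 : m != 0 by apply: contraTneq Hmw => ->; rewrite mul0r ltxx.
have p0n : p0 != 0 by apply: contraTneq Hmw => E; rewrite -/p0 E mulr0 ltxx.
pose lam := Pf b / p0.
have lam_gt0 : 0 < lam.
  have -> : lam = (m * Pf U) / (m * p0) by rewrite /lam Pfb; field; apply/andP.
  by rewrite divr_gt0.
pose mu := Num.sqrt lam.
have mu_gt0 : 0 < mu by rewrite sqrtr_gt0.
have mu2 : mu ^+ 2 = lam by rewrite sqr_sqrtr // ltW.
have mun0 : mu != 0 by rewrite gt_eqF.
pose bh := mu^-1 *: b.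
pose S := w + bh.
pose T := w - bh.
have Hbh : bh^T = - bh by exact: skew_scale.
have HS : S^T = - S by exact: skew_add.
have HT : T^T = - T by apply: skew_add => //; exact: skew_opp.
have Pfbh : Pf bh = p0.
  rewrite /bh Pf_scale exprVn mu2 /lam; field; apply/andP; split=> //.
  by apply: contraTneq lam_gt0 => E; rewrite /lam E mul0r ltxx.
have qbh : qf w bh = 0.
  by rewrite /bh -[mu^-1 *: b]addr0 qf_linr Hqb mulr0 add0r /qf /en !mxE; ring.
have PfS : Pf S = 2%:R * p0.
  have -> : Pf S = Pf w + Pf bh + qf w bh by rewrite /S /Pf /qf /en !mxE; ring.
  by rewrite Pfbh qbh /p0; ring.
have PfT : Pf T = Pf S.
  have -> : Pf T = Pf w + Pf bh - qf w bh by rewrite /T /Pf /qf /en !mxE; ring.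
  by rewrite PfS Pfbh qbh /p0; ring.
have qST : qf S T = 0.
  have -> : qf S T = 2%:R * Pf w - 2%:R * Pf bh by rewrite /S /T /Pf /qf /en !mxE; ring.
  by rewrite Pfbh /p0 subrr.
have HpS : Pf S != 0 by rewrite PfS mulf_neq0 // pnatr_eq0.
pose G := Gm S T.
have GS := GS HS HT HpS PfT qST.
have GT := GT HS HT HpS PfT qST.
have detG := detG HS HT HpS PfT qST.
have Gu := G_unit HS HT HpS PfT qST.
rewrite -/G in GS GT detG Gu.
pose J := invmx G *m J0 *m G.
have HGJ : G *m J = J0 *m G by rewrite /J !mulmxA mulmxV // mul1mx.
have acsJ : acs J.
  have E : G *m (J *m J) = - G.
    by rewrite mulmxA HGJ -mulmxA HGJ mulmxA J0J0 mulNmx mul1mx.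
  by rewrite /acs -(mulKmx Gu (J *m J)) E mulmxN mulVmx.
have rowJ i : row i G *m J = ebasis R i *m J0 *m G.
  by rewrite rowE -mulmxA HGJ mulmxA.
have orJ : induces_orient m J.
  exists (row (inord 0) G), (row (inord 2) G).
  have [E0 E2] := eb_J0.
  rewrite /= !rowJ E0 E2 -!rowE row_quad.
  have dGn : \det G != 0 by move: Gu; rewrite unitmxE unitfE.
  split => //; rewrite /vol row_quad.
  have P2 : 0 < Pf S ^+ 2 by rewrite lt0r sqrf_eq0 HpS sqr_ge0.
  rewrite -(pmulr_lgt0 _ P2).
  have -> : m * \det G * Pf S ^+ 2 = m * Pf S by rewrite expr2 mulrA -(mulrA m) detG mulr1.
  by rewrite PfS mulrCA pmulr_rgt0 // ltr0n.
have wE : w = 2%:R^-1 *: (S + T).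
  apply/matrixP => x y; rewrite /S /T /bh !mxE; field; by rewrite ?pnatr_eq0 ?mun0.
have bhE : bh = 2%:R^-1 *: (S + - T).
  apply/matrixP => x y; rewrite /S /T /bh !mxE; field; by rewrite ?pnatr_eq0 ?mun0.
have tamw : tamed w J.
  apply/(tamed_tr _ Gu HGJ) => u Hu.
  rewrite wE sandwich GS GT mks_add mks_scale gqE; apply: C2 => //; lra.
have [W [HWs [HWt HWi]]] := TC J acsJ orJ (ex_intro _ w (conj Hw tamw)).
have HWk : W^T = - W by case: HWs => [[]].
pose W' := G *m W *m G^T.
have W'E := skewE (skew_tr G HWk).
have H1 : forall u : vec, u != 0 -> 0 < gq (en W' 0 1) (en W' 0 2) (en W' 0 3)
    (en W' 1 2) (en W' 1 3) (en W' 2 3) u.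
  move=> u Hu; rewrite -gqE -W'E; exact: (proj1 (tamed_tr W Gu HGJ) HWt u Hu).
have [Ha Hf _] := C1 H1.
have H2 := proj1 (inv_tr W Gu HGJ) HWi.
rewrite W'E in H2.
have [Hbe Hcd] := C3 H2.
have qWb : qf W b = 0 by rewrite /b -pair2_hodge // HUc //; case: HWs.
have qWbh : qf W bh = 0.
  by rewrite /bh -[mu^-1 *: b]addr0 qf_linr qWb mulr0 add0r /qf /en !mxE; ring.
have := qf_transformG G HWk Hbh; rewrite qWbh mulr0 W'E.
rewrite bhE sandwich mulmxN mulNmx GS GT mks_opp mks_add mks_scale qf_mks.
lra.
Qed.

End Fwd.

Section Basis.
Variable R : rcfType.
Notation vec := 'rV[R]_4.
Variable SS : vec -> Prop.
Hypothesis SS0 : SS 0.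
Hypothesis SSlin : forall x y (t : R), SS x -> SS y -> SS (t *: x + y).

Lemma SSadd x y : SS x -> SS y -> SS (x + y).
Proof. by move=> hx hy; rewrite -[x]scale1r; apply: SSlin. Qed.
Lemma SSscale x (t : R) : SS x -> SS (t *: x).
Proof. by move=> hx; rewrite -[_ *: _]addr0; apply: SSlin. Qed.

Definition good m (M : 'M[R]_(m, 4)) := forall i, SS (row i M).

Lemma good_sub m (M : 'M[R]_(m, 4)) (v : vec) : good M -> (v <= M)%MS -> SS v.
Proof.
move=> gM /submxP [D ->]; rewrite mulmx_sum_row.
apply: (big_ind SS) => //; first by move=> x y; apply: SSadd.
by move=> i _; apply: SSscale.
Qed.

Lemma basis_ex : exists M : 'M[R]_4, forall v, SS v <-> (v <= M)%MS.
Proof.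
suff H : forall k (M : 'M[R]_4), good M -> (4 - \rank M <= k)%N ->
    exists M' : 'M[R]_4, forall v, SS v <-> (v <= M')%MS.
  apply: (H 4%N 0) => [i|]; first by rewrite row0.
  by rewrite mxrank0.
elim=> [|k IH] M gM hk.
- exists M => v; split; last exact: good_sub.
  move=> _; apply: submx_full; rewrite /row_full eqn_leq rank_leq_col /=; lia.
- case: (classic (exists v : vec, SS v /\ ~~ (v <= M)%MS)) => [[v [Sv nvM]] | Hn]; last first.
    exists M => v; split; last exact: good_sub.
    move=> Sv; apply/negPn/negP => nv; apply: Hn; by exists v.
  pose M2 := (M + v)%MS.
  have gv : good v by move=> i; rewrite (_ : row i v = v) //; apply/matrixP => a b; rewrite !mxE (ord1 a) (ord1 i).
  have gM2 : good M2.
    move=> i; have /sub_addsmxP [u ->] := row_sub i M2.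
    apply: SSadd; [exact: good_sub gM (submxMl _ _) | exact: good_sub gv (submxMl _ _)].
  have lt : (\rank M < \rank M2)%N.
    have sMM2 : (M <= M2)%MS by exact: addsmxSl.
    have nM2M : ~~ (M2 <= M)%MS.
      apply: contra nvM => h; exact: submx_trans (addsmxSr M v) h.
    have := mxrank_leqif_sup sMM2; move/leqifP; by rewrite (negbTE nM2M).
  have le4 := rank_leq_col M2.
  apply: (IH M2 gM2); lia.
Qed.

End Basis.

Section Lorentz.
Variable R : rcfType.
Notation vec := 'rV[R]_4.

Definition Qf (s : vec) := 4%:R * ev s 0 * ev s 1 - ev s 2 ^+ 2 - ev s 3 ^+ 2.
Definition Bf (s t : vec) :=
  2%:R * (ev s 0 * ev t 1 + ev s 1 * ev t 0) - ev s 2 * ev t 2 - ev s 3 * ev t 3.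

Lemma evD (x y : vec) i : ev (x + y) i = ev x i + ev y i.
Proof. by rewrite /ev mxE. Qed.
Lemma evZ (x : vec) (t : R) i : ev (t *: x) i = t * ev x i.
Proof. by rewrite /ev mxE. Qed.
Lemma evN (x : vec) i : ev (- x) i = - ev x i.
Proof. by rewrite /ev mxE. Qed.

Lemma Qf_lin (x y : vec) (t : R) : Qf (x + t *: y) = Qf x + 2%:R * t * Bf x y + t ^+ 2 * Qf y.
Proof. rewrite /Qf /Bf !evD !evZ; ring. Qed.
Lemma Bf_sym (x y : vec) : Bf x y = Bf y x.
Proof. rewrite /Bf; ring. Qed.
Lemma Bf_xx (x : vec) : Bf x x = Qf x.
Proof. rewrite /Bf /Qf; ring. Qed.
Lemma Qf0 : Qf 0 = 0.
Proof. rewrite /Qf !ev0; ring. Qed.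

Definition bmf (i j : nat) : R :=
  match i, j with 0, 1 => 2%:R | 1, 0 => 2%:R | 2, 2 => -1 | 3, 3 => -1 | _, _ => 0 end.
Definition Bm : 'M[R]_4 := \matrix_(i < 4, j < 4) bmf i j.

Lemma BfM (s t : vec) : Bf s t = (s *m Bm *m t^T) 0 0.
Proof.
rewrite mxE sum4; rewrite !mxE !sum4 /Bm !mxE !inordK //= /Bf /ev; ring.
Qed.

Lemma Bm_unit : Bm \in unitmx.
Proof.
rewrite unitmxE unitfE /Bm det4f /bmf /=.
have -> : 0 * (0 * (-1) * (-1) - 0 * 0 * 0 - 0 * 0 * (-1) + 0 * 0 * 0 + 0 * 0 * 0 - 0 * (-1) * 0)
  - (2%:R : R) * (2%:R * (-1) * (-1) - 2%:R * 0 * 0 - 0 * 0 * (-1) + 0 * 0 * 0 + 0 * 0 * 0 - 0 * (-1) * 0)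
  + 0 * (2%:R * 0 * (-1) - 2%:R * 0 * 0 - 0 * 0 * (-1) + 0 * 0 * 0 + 0 * 0 * 0 - 0 * 0 * 0)
  - 0 * (2%:R * 0 * 0 - 2%:R * (-1) * 0 - 0 * 0 * 0 + 0 * (-1) * 0 + 0 * 0 * 0 - 0 * 0 * 0)
  = - 4%:R by ring.
by rewrite oppr_eq0 pnatr_eq0.
Qed.

Variable SS : vec -> Prop.
Hypothesis SS0 : SS 0.
Hypothesis SSlin : forall x y (t : R), SS x -> SS y -> SS (t *: x + y).
Hypothesis Hno : forall s, SS s -> ~ (0 < ev s 0 /\ ev s 2 ^+ 2 + ev s 3 ^+ 2 < 4%:R * ev s 0 * ev s 1).

Lemma SS_Qf s : SS s -> Qf s <= 0.
Proof.
move=> Ss; rewrite leNgt; apply/negP => Hq.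
have h2 := sqr_ge0 (ev s 2); have h3 := sqr_ge0 (ev s 3).
have Hp : 0 < ev s 0 * ev s 1 by move: Hq; rewrite /Qf; lra.
case: (ltgtP (ev s 0) 0) => h0.
- apply: (Hno (SSscale SS0 SSlin (-1) Ss)); rewrite !evZ; split; first lra.
  move: Hq; rewrite /Qf; nra.
- apply: (Hno Ss); split => //; move: Hq; rewrite /Qf; lra.
- by move: Hp; rewrite h0 mul0r ltxx.
Qed.

Lemma caseA n : SS n -> Qf n = 0 -> forall s, SS s -> Bf n s = 0.
Proof.
move=> Sn Qn s Ss; apply/eqP; apply: contraT => hb.
set q := Qf s; set b := Bf n s.
have hq : q <= 0 by exact: SS_Qf.
set t := b / (1 - q).
have h1q : 0 < 1 - q by lra.
have key : 0 < b ^+ 2 * (2%:R - q) / (1 - q) ^+ 2.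
  rewrite divr_gt0 //; last by rewrite exprn_gt0.
  rewrite mulr_gt0 //; last by lra.
  by rewrite lt0r sqrf_eq0 hb sqr_ge0.
have := SS_Qf (SSlin t Ss Sn); rewrite addrC Qf_lin Qn add0r -/b -/q.
have -> : 2%:R * t * b + t ^+ 2 * q = b ^+ 2 * (2%:R - q) / (1 - q) ^+ 2.
  by rewrite /t; field; rewrite gt_eqF.
by move=> H; have := lt_le_trans key H; rewrite ltxx.
Qed.

Lemma caseB : (forall n, SS n -> n != 0 -> Qf n < 0) ->
  exists k : vec, [/\ k != 0, 0 < Qf k & forall s, SS s -> Bf k s = 0].
Proof.
move=> Hneg.
have [M HM] := basis_ex SS0 SSlin.
pose Kb := kermx (Bm *m M^T).
have HK : forall k : vec, (k <= Kb)%MS -> forall s, SS s -> Bf k s = 0.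
  move=> k /sub_kermxP Hk s /HM /submxP [D ->].
  by rewrite BfM trmx_mul mulmxA -(mulmxA k Bm) Hk mul0mx mxE.
have cap0 : (M :&: Kb)%MS = 0.
  apply/row_matrixP => i; rewrite row0.
  have /andP[h1 h2] : (row i (M :&: Kb)%MS <= M)%MS && (row i (M :&: Kb)%MS <= Kb)%MS.
    by rewrite -sub_capmx row_sub.
  move: h1 h2; set v := row i _ => h1 h2.
  have Sv : SS v by apply/HM.
  have Bvv := HK v h2 v Sv; rewrite Bf_xx in Bvv.
  case: (eqVneq v 0) => // hv.
  by have := Hneg v Sv hv; rewrite Bvv ltxx.
have rk : \rank (M + Kb)%MS = 4%N.
  rewrite mxrank_disjoint_sum // mxrank_ker.
  have -> : \rank (Bm *m M^T) = \rank M.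
    rewrite -mxrank_tr trmx_mul trmxK mxrankMfree //.
    by rewrite row_free_unit unitmx_tr Bm_unit.
  have := rank_leq_col M; lia.
pose e : vec := mkv 1 1 0 0.
have : (e <= (M + Kb)%MS)%MS by apply: submx_full; rewrite /row_full rk.
case/sub_addsmxP => [[u1 u2] /= Ee].
have Ss : SS (u1 *m M) by apply/HM; exact: submxMl.
have Hk : (u2 *m Kb <= Kb)%MS by exact: submxMl.
have Bsk : Bf (u1 *m M) (u2 *m Kb) = 0 by rewrite Bf_sym; exact: HK.
have Qe : Qf e = 4%:R by rewrite /Qf; have [-> -> -> ->] := ev_mkv (1:R) 1 0 0; ring.
have Qsk : Qf e = Qf (u1 *m M) + Qf (u2 *m Kb).
  rewrite Ee; have := Qf_lin (u1 *m M) (u2 *m Kb) 1; rewrite scale1r Bsk => ->; ring.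
have Qs := SS_Qf Ss.
have Qk : 0 < Qf (u2 *m Kb) by lra.
exists (u2 *m Kb); split => //; last exact: HK.
by apply/eqP => k0; move: Qk; rewrite k0 Qf0 ltxx.
Qed.

Definition LLconcl (b : vec) := [/\ b != 0, 0 <= ev b 0, 0 <= ev b 1,
  ev b 2 ^+ 2 + ev b 3 ^+ 2 <= ev b 0 * ev b 1 &
  forall s, SS s -> ev s 0 * ev b 0 + ev s 1 * ev b 1 + ev s 2 * ev b 2 + ev s 3 * ev b 3 = 0].

Lemma beta_of n : n != 0 -> 0 <= Qf n -> (forall s, SS s -> Bf n s = 0) ->
  exists b : vec, LLconcl b.
Proof.
move=> nn Qn Hn.
have h2 := sqr_ge0 (ev n 2); have h3 := sqr_ge0 (ev n 3).
have Hp : 0 <= ev n 0 * ev n 1 by move: Qn; rewrite /Qf; lra.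
have Hs : ev n 0 + ev n 1 != 0.
  apply/eqP => E.
  have e1 : ev n 1 = - ev n 0 by lra.
  have e0 : ev n 0 = 0 by move: Hp; rewrite e1; nra.
  have e1' : ev n 1 = 0 by lra.
  have e2 : ev n 2 = 0.
    apply/eqP; rewrite -sqrf_eq0; apply/eqP; move: Qn; rewrite /Qf e0 e1'; lra.
  have e3 : ev n 3 = 0.
    apply/eqP; rewrite -sqrf_eq0; apply/eqP; move: Qn; rewrite /Qf e0 e1'; lra.
  by move: nn; rewrite (vec_eq0 e0 e1' e2 e3) eqxx.
have key (sg : R) : sg * sg = 1 -> 0 < sg * (ev n 0 + ev n 1) ->
    exists b : vec, LLconcl b.
  move=> sg2 hs.
  have hp : 0 <= (sg * ev n 0) * (sg * ev n 1).
    by rewrite mulrACA sg2 mul1r.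
  have n0 : 0 <= sg * ev n 0.
    rewrite leNgt; apply/negP => h.
    have h1 : 0 < sg * ev n 1 by move: hs; rewrite mulrDr; lra.
    have : sg * ev n 0 * (sg * ev n 1) < 0 by rewrite pmulr_llt0.
    lra.
  have n1 : 0 <= sg * ev n 1.
    rewrite leNgt; apply/negP => h.
    have h1 : 0 < sg * ev n 0 by move: hs; rewrite mulrDr; lra.
    have : sg * ev n 0 * (sg * ev n 1) < 0 by rewrite pmulr_rlt0.
    lra.
  exists (mkv (sg * (2%:R * ev n 1)) (sg * (2%:R * ev n 0)) (sg * - ev n 2) (sg * - ev n 3)).
  rewrite /LLconcl; have [-> -> -> ->] := ev_mkv (sg * (2%:R * ev n 1)) (sg * (2%:R * ev n 0))
     (sg * - ev n 2) (sg * - ev n 3).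
  split.
  - case: (eqVneq (sg * ev n 1) 0) => e1.
    + apply: (@neq0_ev _ _ 1); have [_ -> _ _] := ev_mkv (sg * (2%:R * ev n 1)) (sg * (2%:R * ev n 0))
        (sg * - ev n 2) (sg * - ev n 3).
      rewrite mulrCA mulf_neq0 ?pnatr_eq0 //; apply/eqP => e0; move: hs; rewrite mulrDr e0 e1; lra.
    + apply: (@neq0_ev _ _ 0); have [-> _ _ _] := ev_mkv (sg * (2%:R * ev n 1)) (sg * (2%:R * ev n 0))
        (sg * - ev n 2) (sg * - ev n 3).
      by rewrite mulrCA mulf_neq0 ?pnatr_eq0.
  - by rewrite mulrCA mulr_ge0 // ler0n.
  - by rewrite mulrCA mulr_ge0 // ler0n.
  - have -> : (sg * - ev n 2) ^+ 2 + (sg * - ev n 3) ^+ 2 = (sg * sg) * (ev n 2 ^+ 2 + ev n 3 ^+ 2)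
      by ring.
    have -> : sg * (2%:R * ev n 1) * (sg * (2%:R * ev n 0)) = (sg * sg) * (4%:R * ev n 0 * ev n 1)
      by ring.
    by rewrite sg2 !mul1r; move: Qn; rewrite /Qf; lra.
  - move=> s Ss; have := Hn s Ss; rewrite Bf_sym /Bf => E.
    have -> : ev s 0 * (sg * (2%:R * ev n 1)) + ev s 1 * (sg * (2%:R * ev n 0)) +
      ev s 2 * (sg * - ev n 2) + ev s 3 * (sg * - ev n 3) =
      sg * (2%:R * (ev s 0 * ev n 1 + ev s 1 * ev n 0) - ev s 2 * ev n 2 - ev s 3 * ev n 3) by ring.
    by rewrite E mulr0.
case: (ltP 0 (ev n 0 + ev n 1)) => hs.
  by apply: (key 1); rewrite ?mul1r.
apply: (key (-1)); first by rewrite mulrNN mul1r.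
rewrite mulN1r oppr_gt0 lt_neqAle hs andbT; exact: Hs.
Qed.

Lemma LL : exists b : vec, LLconcl b.
Proof.
case: (classic (exists n, SS n /\ n != 0 /\ Qf n = 0)) => [[n [Sn [nn Qn]]] | Hn].
  by apply: (beta_of nn); [rewrite Qn | exact: caseA].
have Hneg : forall n, SS n -> n != 0 -> Qf n < 0.
  move=> n Sn nn; rewrite lt_neqAle SS_Qf // andbT; apply/eqP => Qn.
  by apply: Hn; exists n.
have [k [kn Qk Hk]] := caseB Hneg.
by apply: (beta_of kn) => //; exact: ltW.
Qed.

End Lorentz.

Section Ext.
Variable R : rcfType.
Variable T : lmodType R.
Variable Zp : T -> Prop.
Hypothesis Zlin : forall x y (t : R), Zp x -> Zp y -> Zp (t *: x + y).
Variables L p r : T -> R.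
Hypothesis Llin : forall x y t, L (t *: x + y) = t * L x + L y.
Hypothesis plin : forall x y t, p (t *: x + y) = t * p x + p y.
Hypothesis rlin : forall x y t, r (t *: x + y) = t * r x + r y.
Hypothesis Hker : forall x, Zp x -> p x = 0 -> r x = 0 -> L x = 0.

Lemma comb2 x1 x2 x (a b : R) : Zp x1 -> Zp x2 -> Zp x ->
  p x = a * p x1 + b * p x2 -> r x = a * r x1 + b * r x2 ->
  L x = a * L x1 + b * L x2.
Proof.
move=> Z1 Z2 Z hp hr.
pose y := (- a) *: x1 + ((- b) *: x2 + x).
have Zy : Zp y by apply: Zlin => //; apply: Zlin.
have : L y = 0.
  apply: Hker => //.
    by rewrite /y !plin hp; ring.
  by rewrite /y !rlin hr; ring.
rewrite /y !Llin => E; apply/eqP; rewrite -subr_eq0; apply/eqP; rewrite -E; ring.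
Qed.

Lemma ext2 : exists g1 g2 : R, forall x, Zp x -> L x + p x * g1 + r x * g2 = 0.
Proof.
case: (classic (exists x1 x2, [/\ Zp x1, Zp x2 & p x1 * r x2 - p x2 * r x1 != 0]))
  => [[x1 [x2 [Z1 Z2 D]]] | Hn].
  set d := p x1 * r x2 - p x2 * r x1 in D.
  exists ((- L x1 * r x2 + L x2 * r x1) / d), ((- L x2 * p x1 + L x1 * p x2) / d).
  move=> x Z.
  rewrite (@comb2 x1 x2 x ((p x * r x2 - r x * p x2) / d) ((p x1 * r x - r x1 * p x) / d)) //.
  - rewrite /d; field; exact: D.
  - rewrite /d; field; exact: D.
  - rewrite /d; field; exact: D.
have Hdep : forall x1 x2, Zp x1 -> Zp x2 -> p x1 * r x2 - p x2 * r x1 = 0.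
  move=> x1 x2 Z1 Z2; apply/eqP; apply: contraT => h; case: Hn; by exists x1, x2.
case: (classic (exists x1, Zp x1 /\ p x1 ^+ 2 + r x1 ^+ 2 != 0)) => [[x1 [Z1 N]] | Hn2].
  set n1 := p x1 ^+ 2 + r x1 ^+ 2 in N.
  exists (- L x1 * p x1 / n1), (- L x1 * r x1 / n1).
  move=> x Z.
  have dd := Hdep x x1 Z Z1.
  set t := (p x * p x1 + r x * r x1) / n1.
  have hp : p x = t * p x1 + 0 * p x1.
    rewrite /t; apply/eqP; rewrite -subr_eq0; apply/eqP.
    transitivity (r x1 / n1 * (p x * r x1 - p x1 * r x)); last by rewrite dd mulr0.
    rewrite /n1; field; exact: N.
  have hr : r x = t * r x1 + 0 * r x1.
    rewrite /t; apply/eqP; rewrite -subr_eq0; apply/eqP.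
    transitivity (- p x1 / n1 * (p x * r x1 - p x1 * r x)); last by rewrite dd mulr0.
    rewrite /n1; field; exact: N.
  rewrite (@comb2 x1 x1 x t 0) // /t /n1; field; exact: N.
exists 0, 0 => x Z.
have E : p x ^+ 2 + r x ^+ 2 = 0.
  apply/eqP; apply: contraT => h; case: Hn2; by exists x.
have h1 := sqr_ge0 (p x); have h2 := sqr_ge0 (r x).
have e1 : p x = 0 by apply/eqP; rewrite -sqrf_eq0; apply/eqP; lra.
have e2 : r x = 0 by apply/eqP; rewrite -sqrf_eq0; apply/eqP; lra.
by rewrite Hker // !mulr0 !addr0.
Qed.

End Ext.

Section Bwd.
Variable R : rcfType.
Notation vec := 'rV[R]_4.

Lemma SP (a f X Y b0 b1 b2 b3 : R) : 0 < a -> X ^+ 2 + Y ^+ 2 < 4%:R * a * f ->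
  0 <= b0 -> 0 <= b1 -> b2 ^+ 2 + b3 ^+ 2 <= b0 * b1 -> (b0 != 0) || (b1 != 0) ->
  0 < a * b0 + f * b1 + X * b2 + Y * b3.
Proof.
move=> Ha Hd h0 h1 hb hn.
have hX := sqr_ge0 X; have hY := sqr_ge0 Y.
have h2 := sqr_ge0 b2; have h3 := sqr_ge0 b3.
have Hf : 0 < f.
  have : 0 < 4%:R * a * f by lra.
  by rewrite -mulrA pmulr_rgt0 ?ltr0n // pmulr_rgt0.
case: (eqVneq b0 0) => e0.
  have e2 : b2 = 0 by apply/eqP; rewrite -sqrf_eq0; apply/eqP; move: hb; rewrite e0 mul0r; lra.
  have e3 : b3 = 0 by apply/eqP; rewrite -sqrf_eq0; apply/eqP; move: hb; rewrite e0 mul0r; lra.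
  move: hn; rewrite e0 eqxx /= => hn.
  have : 0 < b1 by rewrite lt0r hn h1.
  rewrite e2 e3 !mulr0 !addr0 add0r => hb1; exact: mulr_gt0.
case: (eqVneq b1 0) => e1.
  have e2 : b2 = 0 by apply/eqP; rewrite -sqrf_eq0; apply/eqP; move: hb; rewrite e1 mulr0; lra.
  have e3 : b3 = 0 by apply/eqP; rewrite -sqrf_eq0; apply/eqP; move: hb; rewrite e1 mulr0; lra.
  have : 0 < b0 by rewrite lt0r e0 h0.
  rewrite e1 e2 e3 !mulr0 !addr0 => hb0; exact: mulr_gt0.
have p0 : 0 < b0 by rewrite lt0r e0 h0.
have p1 : 0 < b1 by rewrite lt0r e1 h1.
set s := a * b0 + f * b1; set t := X * b2 + Y * b3.
have sp : 0 < s by rewrite /s addr_gt0 // mulr_gt0.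
have s2 : 4%:R * a * f * (b0 * b1) <= s ^+ 2.
  have := sqr_ge0 (a * b0 - f * b1); rewrite /s; move=> h.
  have -> : s ^+ 2 = (a * b0 - f * b1) ^+ 2 + 4%:R * a * f * (b0 * b1) by rewrite /s; ring.
  lra.
have pp : 0 < b0 * b1 by exact: mulr_gt0.
have s3 : (X ^+ 2 + Y ^+ 2) * (b0 * b1) < 4%:R * a * f * (b0 * b1) by rewrite ltr_pM2r.
have s4 : (X ^+ 2 + Y ^+ 2) * (b2 ^+ 2 + b3 ^+ 2) <= (X ^+ 2 + Y ^+ 2) * (b0 * b1).
  by rewrite ler_wpM2l // addr_ge0.
have s5 : t ^+ 2 <= (X ^+ 2 + Y ^+ 2) * (b2 ^+ 2 + b3 ^+ 2).
  have := sqr_ge0 (X * b3 - Y * b2).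
  have -> : (X ^+ 2 + Y ^+ 2) * (b2 ^+ 2 + b3 ^+ 2) = t ^+ 2 + (X * b3 - Y * b2) ^+ 2 by rewrite /t; ring.
  lra.
have st : t ^+ 2 < s ^+ 2 by lra.
rewrite -/s -/t -addrA -/t.
rewrite ltNge; apply/negP => hle.
have : s <= - t by lra.
move=> h; have : s ^+ 2 <= (- t) ^+ 2 by rewrite ler_pXn2r // ?nnegrE ?ltW //; lra.
rewrite sqrrN; lra.
Qed.

Lemma eb_J0_all : [/\ ebasis R (inord 0) *m J0 = ebasis R (inord 1),
  ebasis R (inord 1) *m J0 = - ebasis R (inord 0),
  ebasis R (inord 2) *m J0 = ebasis R (inord 3) &
  ebasis R (inord 3) *m J0 = - ebasis R (inord 2)].
Proof.
split; apply/matrixP => i j; rewrite (ord1 i);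
  have [->|[->|[->|->]]] := ord4_cases j; rewrite !mxE sum4 /J0 !mxE ?inord_eq4 ?inordK //=; ring.
Qed.

Lemma row_quadP (a b c d : vec) :
  let P := \matrix_(i < 4, j < 4) quad a b c d i 0 j in
  [/\ row (inord 0) P = a, row (inord 1) P = b, row (inord 2) P = c & row (inord 3) P = d].
Proof.
by split; apply/matrixP => i j; rewrite !mxE (ord1 i) /quad inordK.
Qed.

Lemma mkv_lin (t a b c d a' b' c' d' : R) :
  t *: mkv a b c d + mkv a' b' c' d' = mkv (t * a + a') (t * b + b') (t * c + c') (t * d + d').
Proof.
apply/matrixP => i j; rewrite !mxE.
by case: j => [[|[|[|[|k]]]] Hj].
Qed.

Lemma mkv0 : mkv 0 0 0 0 = 0 :> vec.
Proof. by apply/matrixP => i j; rewrite !mxE; case: j => [[|[|[|[|k]]]] Hj]. Qed.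

Lemma enlin (P A B : 'M[R]_4) (t : R) i j :
  en (P *m (t *: A + B) *m P^T) i j = t * en (P *m A *m P^T) i j + en (P *m B *m P^T) i j.
Proof. by rewrite mulmxDr mulmxDl -scalemxAr -scalemxAl /en !mxE. Qed.

Lemma en0 (P : 'M[R]_4) i j : en (P *m 0 *m P^T) i j = 0.
Proof. by rewrite mulmx0 mul0mx /en mxE. Qed.

Lemma tamed_nondeg (A J : 'M[R]_4) : tamed A J -> nondeg A.
Proof.
move=> H x Hx; apply/eqP; apply: contraT => hx.
by have := H x hx; rewrite Hx ltxx.
Qed.

End Bwd.

Section Bwd2.
Variable R : rcfType.
Notation vec := 'rV[R]_4.

Lemma backward (c : 'I_4 -> 'I_4 -> 'I_4 -> R) (m : R) :
  (forall U, B2 c U -> Phi m U U <= 0) -> tame_compatible c m.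
Proof.
move=> HB J acsJ [v1 [v2]] /= [HdP HvP] [om [Homs Homt]].
have [r0 r1 r2 r3] := row_quadP v1 (v1 *m J) v2 (v2 *m J).
move: HdP HvP r0 r1 r2 r3.
set P := \matrix_(i < 4, j < 4) quad v1 (v1 *m J) v2 (v2 *m J) i 0 j.
move=> HdP HvP r0 r1 r2 r3.
have Pu : P \in unitmx by rewrite unitmxE unitfE.
have mdP : 0 < m * \det P by move: HvP; rewrite /vol.
have HPJ : P *m J = J0 *m P.
  have [E0 E1 E2 E3] := eb_J0_all R.
  apply/row_matrixP => i; rewrite !row_mul.
  have [->|[->|[->|->]]] := ord4_cases i; rewrite [row _ J0]rowE ?E0 ?E1 ?E2 ?E3 ?mulNmx -?rowE.
  - by rewrite r0 r1.
  - by rewrite r1 r0 -mulmxA acsJ mulmxN mulmx1.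
  - by rewrite r2 r3.
  - by rewrite r3 r2 -mulmxA acsJ mulmxN mulmx1.
apply: NNPP => Hnot.
pose A' (A : 'M[R]_4) := P *m A *m P^T.
pose SS (s : vec) := exists A, [/\ closed2 c A, en (A' A) 0 2 = en (A' A) 1 3,
  en (A' A) 0 3 = - en (A' A) 1 2 &
  s = mkv (en (A' A) 0 1) (en (A' A) 2 3) (en (A' A) 0 2 + en (A' A) 1 3)
          (en (A' A) 0 3 - en (A' A) 1 2)].
have SS0 : SS 0.
  exists 0; rewrite /A' !en0; split; [exact: closed2_0 | by [] | by rewrite oppr0 |].
  by rewrite addr0 subr0 mkv0.
have SSlin : forall x y (t : R), SS x -> SS y -> SS (t *: x + y).
  move=> x y t [A1 [C1 h11 h12 ->]] [A2 [C2 h21 h22 ->]].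
  exists (t *: A1 + A2); rewrite /A' !enlin -/(A' A1) -/(A' A2).
  split; first exact: closed2_lin.
  - by rewrite h11 h21.
  - by rewrite h12 h22; ring.
  - by rewrite mkv_lin; congr mkv; ring.
have Hno : forall s, SS s -> ~ (0 < ev s 0 /\ ev s 2 ^+ 2 + ev s 3 ^+ 2 < 4%:R * ev s 0 * ev s 1).
  move=> s [A [CA h1 h2 ->]]; rewrite /ev !mkvE //= => [[hs0 hsq]].
  apply: Hnot; exists A.
  have HAk : A^T = - A by case: CA.
  have HA'E := skewE (skew_tr P HAk).
  have tA : tamed A J.
    apply/(tamed_tr A Pu HPJ) => u Hu; rewrite HA'E gqE.
    by apply: C2 => //; rewrite -h1 -h2.
  split; first by split => //; exact: tamed_nondeg tA.
  split => //; apply/(inv_tr A Pu HPJ); rewrite HA'E; exact: C3inv.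
have [bt [btn bt0 bt1 btq btorth]] := LL SS0 SSlin Hno.
pose b0 := ev bt 0; pose b1 := ev bt 1; pose b2 := ev bt 2; pose b3 := ev bt 3.
pose La (A : 'M[R]_4) := en (A' A) 0 1 * b0 + en (A' A) 2 3 * b1
  + (en (A' A) 0 2 + en (A' A) 1 3) * b2 + (en (A' A) 0 3 - en (A' A) 1 2) * b3.
pose pa (A : 'M[R]_4) := en (A' A) 0 2 - en (A' A) 1 3.
pose ra (A : 'M[R]_4) := en (A' A) 0 3 + en (A' A) 1 2.
have [g1 [g2 Hg]] : exists g1 g2 : R, forall A, closed2 c A -> La A + pa A * g1 + ra A * g2 = 0.
  apply: (@ext2 R _ (closed2 c) _ La pa ra).
  - by move=> x y t; exact: closed2_lin.
  - by move=> x y t; rewrite /La /A' !enlin; ring.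
  - by move=> x y t; rewrite /pa /A' !enlin; ring.
  - by move=> x y t; rewrite /ra /A' !enlin; ring.
  - move=> A CA hp hr.
    have h1 : en (A' A) 0 2 = en (A' A) 1 3 by apply/eqP; rewrite -subr_eq0; apply/eqP.
    have h2 : en (A' A) 0 3 = - en (A' A) 1 2.
      by apply/eqP; rewrite -subr_eq0 opprK; apply/eqP.
    have := btorth _ (ex_intro _ A (And4 CA h1 h2 erefl)).
    by rewrite {1 3 5 7}/ev !mkvE //=.
pose U' := mks b0 (b2 + g1) (b3 + g2) (g2 - b3) (b2 - g1) b1.
pose U := P^T *m U' *m P.
have HU'k : U'^T = - U' by exact: mks_tr.
have HUk : U^T = - U by have := skew_tr P^T HU'k; rewrite trmxK.
have B2U : B2 c U.
  split => // A CA.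
  have HAk : A^T = - A by case: CA.
  rewrite /U (skewE HAk) pair2_transform -(skewE HAk) (skewE (skew_tr P HAk)) pair2_mks.
  rewrite -(Hg A CA) /La /pa /ra /A'; ring.
have HPhi := HB U B2U.
have PhiE : Phi m U U = 2%:R * m * (\det P * Pf U').
  rewrite (skewE HUk) Phi_mks -(skewE HUk) /U.
  have := Pf_transformG P^T HU'k; rewrite trmxK det_tr => ->; done.
rewrite PhiE in HPhi.
have PfU' : Pf U' <= 0.
  rewrite leNgt; apply/negP => h.
  have : 0 < 2%:R * m * (\det P * Pf U') by rewrite mulrA -(mulrA 2%:R) mulr_gt0 // ?ltr0n // mulr_gt0.
  lra.
move: PfU'; rewrite /U' Pf_mks => PfU'.
have hg1 := sqr_ge0 g1; have hg2 := sqr_ge0 g2.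
have Hbq : b2 ^+ 2 + b3 ^+ 2 <= b0 * b1 := btq.
have eg1 : g1 = 0 by apply/eqP; rewrite -sqrf_eq0; apply/eqP; nra.
have eg2 : g2 = 0 by apply/eqP; rewrite -sqrf_eq0; apply/eqP; nra.
have Lom : La om = 0.
  have Com : closed2 c om by case: Homs.
  by have := Hg om Com; rewrite eg1 eg2 !mulr0 !addr0.
have HomK : om^T = - om by case: Homs => [[]].
have HoE := skewE (skew_tr P HomK).
have H1 : forall u : vec, u != 0 -> 0 < gq (en (A' om) 0 1) (en (A' om) 0 2) (en (A' om) 0 3)
    (en (A' om) 1 2) (en (A' om) 1 3) (en (A' om) 2 3) u.
  move=> u Hu; rewrite -gqE -HoE; exact: (proj1 (tamed_tr om Pu HPJ) Homt u Hu).
have [Ha Hf Hd] := C1 H1.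
have bn : (b0 != 0) || (b1 != 0).
  apply: contraT; rewrite negb_or !negbK => /andP[/eqP e0 /eqP e1].
  have hb2 := sqr_ge0 b2; have hb3 := sqr_ge0 b3.
  move: Hbq; rewrite e0 e1 mul0r => Hbq.
  have e2 : b2 = 0 by apply/eqP; rewrite -sqrf_eq0; apply/eqP; lra.
  have e3 : b3 = 0 by apply/eqP; rewrite -sqrf_eq0; apply/eqP; lra.
  by move: btn; rewrite (vec_eq0 e0 e1 e2 e3) eqxx.
have := SP Ha Hd bt0 bt1 Hbq bn.
move: Lom; rewrite /La => ->; rewrite ltxx.
done.
Qed.


End Bwd2.

Unset Implicit Arguments.

Theorem theorem1 (R : rcfType) (c : 'I_4 -> 'I_4 -> 'I_4 -> R) (m : R) :
  is_lie c -> m != 0 ->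
  (exists w : 'M[R]_4, symplectic c w /\
     exists k : R, 0 < k /\ forall v, wedge22 w w v = k * vol m v) ->
  (tame_compatible c m <-> forall U : 'M[R]_4, B2 c U -> Phi m U U <= 0).
Proof.
move=> _ mn0 [w [Hw [k [hk Hwk]]]]; split; last exact: backward.
move=> TC U HU; rewrite leNgt; apply/negP => hP.
have HUk : U^T = - U by case: HU.
have HmU : 0 < m * Pf U.
  move: hP; rewrite (skewE HUk) Phi_mks -(skewE HUk) -mulrA pmulr_rgt0 // ltr0n.
have Hws : w^T = - w by case: Hw => [[]].
have Hwk' := Hwk (quad (ebasis R (inord 0)) (ebasis R (inord 1)) (ebasis R (inord 2)) (ebasis R (inord 3))).
rewrite (skewE Hws) wedge_mks -(skewE Hws) vol_eb //= in Hwk'.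
have m2 : 0 < m * m by rewrite -expr2 lt0r sqrf_eq0 mn0 sqr_ge0.
have Hmw : 0 < m * Pf w.
  have -> : Pf w = k * (m * 1) / 2%:R.
    rewrite -Hwk'; field; by rewrite ?pnatr_eq0.
  have -> : m * (k * (m * 1) / 2%:R) = k * (m * m) / 2%:R by rewrite mulr1; field; rewrite ?pnatr_eq0.
  by rewrite divr_gt0 ?ltr0n // mulr_gt0.
exact: (forward Hw Hmw HU HmU TC).
Qed.
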